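(* Let $\mu$ be a computable measure on $\{0,1\}^{\mathbb{N}}\times\{0,1\}^{\mathbb{N}}$, and let $\mu'$ be the push-forward of $\mu$ under the map $(A,B)\mapsto A\oplus B$. Then a pair $(X,Y)$ is $\mu$-computably random if and only if $X\oplus Y$ is $\mu'$-computably random.
   Context: $A\oplus B$ is the join $A(0)B(0)A(1)B(1)\ldots$. Write $\mu(\sigma)=\mu([\sigma])$ and $\mu(\sigma\times\tau)=\mu([\sigma]\times[\tau])$; a measure is computable if these values are uniformly computable. For a computable measure $\mu$ on $\{0,1\}^{\mathbb{N}}$, $X$ is $\mu$-computably random iff $t(X)<\infty$ for every lower semicomputable $t:\{0,1\}^{\mathbb{N}}\to[0,\infty]$ and every computable measure $\nu$ on $\{0,1\}^{\mathbb{N}}$ with $\int_{[\sigma]}t\,d\mu\le\nu(\sigma)$ for all strings $\sigma$. For a computable measure $\mu$ on the product, $(X,Y)$ is $\mu$-computably random iff $t(X,Y)<\infty$ for every lower semicomputable $t:\{0,1\}^{\mathbb{N}}\times\{0,1\}^{\mathbb{N}}\to[0,\infty]$ and every computable measure $\nu$ on the product with $\int_{[\sigma]\times[\tau]}t\,d\mu\le\nu(\sigma\times\tau)$ for all strings $\sigma,\tau$. *)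

(* Defs.v *)
From Stdlib Require Import Reals List Arith.
Import ListNotations.
Open Scope R_scope.

Inductive recf : Type :=
| RZero : recf
| RSucc : recf
| RProj : nat -> recf
| RComp : recf -> list recf -> recf
| RPrec : recf -> recf -> recf
| RMin  : recf -> recf.

Inductive eval : recf -> list nat -> nat -> Prop :=
| ev_zero : forall v, eval RZero v 0
| ev_succ : forall x v, eval RSucc (x :: v) (S x)
| ev_proj : forall i v, (i < length v)%nat -> eval (RProj i) v (nth i v 0%nat)
| ev_comp : forall f gs v ws y, evals gs v ws -> eval f ws y -> eval (RComp f gs) v y
| ev_prec0 : forall f g v y, eval f v y -> eval (RPrec f g) (0%nat :: v) y
| ev_precS : forall f g n v r y,
    eval (RPrec f g) (n :: v) r -> eval g (n :: r :: v) y ->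
    eval (RPrec f g) (S n :: v) y
| ev_min : forall f v n,
    eval f (n :: v) 0%nat ->
    (forall m, (m < n)%nat -> exists k, eval f (m :: v) (S k)) ->
    eval (RMin f) v n
with evals : list recf -> list nat -> list nat -> Prop :=
| evs_nil : forall v, evals [] v []
| evs_cons : forall g gs v y ys, eval g v y -> evals gs v ys -> evals (g :: gs) v (y :: ys).

Definition computable_fun (f : nat -> nat) : Prop :=
  exists c : recf, forall n, eval c [n] (f n).

(* bijective binary code of finite binary strings *)
Fixpoint code_str (s : list bool) : nat :=
  match s with
  | [] => 0%nat
  | b :: s' => S (2 * code_str s' + (if b then 1 else 0))%nat
  end.

Definition npair (x y : nat) : nat := ((x + y) * (x + y + 1) / 2 + y)%nat.

Definition Qof (p m d : nat -> nat) (n : nat) : R :=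
  (INR (p n) - INR (m n)) / INR (S (d n)).

Definition cantor := nat -> bool.

Fixpoint prefix (X : cantor) (n : nat) : list bool :=
  match n with
  | O => []
  | S k => prefix X k ++ [X k]
  end.

Definition in_cyl (s : list bool) (X : cantor) : Prop :=
  forall i, (i < length s)%nat -> nth i s false = X i.

Fixpoint strings (n : nat) : list (list bool) :=
  match n with
  | O => [[]]
  | S k => flat_map (fun s => [s ++ [false]; s ++ [true]]) (strings k)
  end.

Definition sumR {A} (l : list A) (f : A -> R) : R :=
  fold_right (fun a acc => f a + acc) 0 l.

Definition join (A B : cantor) : cantor :=
  fun n => if Nat.even n then A (Nat.div2 n) else B (Nat.div2 n).

Fixpoint evens (s : list bool) : list bool :=
  match s with
  | [] => []
  | b :: s' => b :: odds s'
  end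
with odds (s : list bool) : list bool :=
  match s with
  | [] => []
  | _ :: s' => evens s'
  end.

Inductive ereal : Type := EFin (r : R) | EInf.

Definition ele (a b : ereal) : Prop :=
  match a, b with
  | _, EInf => True
  | EInf, EFin _ => False
  | EFin x, EFin y => x <= y
  end.

Definition is_sup_seq (a : nat -> R) (e : ereal) : Prop :=
  match e with
  | EFin r => is_lub (fun x => exists n, x = a n) r
  | EInf => forall M, exists n, M < a n
  end.

(* a (probability) measure mu on {0,1}^N, via mu(s) = mu([s]) *)
Definition is_measure (mu : list bool -> R) : Prop :=
  mu [] = 1 /\
  (forall s, 0 <= mu s) /\
  (forall s, mu s = mu (s ++ [false]) + mu (s ++ [true])).

(* probability measure on the product, via mu s t = mu([s] x [t]) *)
Definition is_measure2 (mu : list bool -> list bool -> R) : Prop :=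
  mu [] [] = 1 /\
  (forall s t, 0 <= mu s t) /\
  (forall s t, mu s t = mu (s ++ [false]) t + mu (s ++ [true]) t) /\
  (forall s t, mu s t = mu s (t ++ [false]) + mu s (t ++ [true])).

Definition computable_measure (mu : list bool -> R) : Prop :=
  is_measure mu /\
  exists p m d, computable_fun p /\ computable_fun m /\ computable_fun d /\
    forall s k, Rabs (Qof p m d (npair (code_str s) k) - mu s) <= / 2 ^ k.

Definition computable_measure2 (mu : list bool -> list bool -> R) : Prop :=
  is_measure2 mu /\
  exists p m d, computable_fun p /\ computable_fun m /\ computable_fun d /\
    forall s t k,
      Rabs (Qof p m d (npair (code_str s) (npair (code_str t) k)) - mu s t) <= / 2 ^ k.

(* push-forward of mu under (A,B) |-> A (+) B, evaluated on cylinders: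
   the preimage of [r] under the join map is [evens r] x [odds r]. *)
Definition pushjoin (mu : list bool -> list bool -> R) : list bool -> R :=
  fun r => mu (evens r) (odds r).

Definition lsc (t : cantor -> ereal) : Prop :=
  (forall X, ele (EFin 0) (t X)) /\
  exists p m d, computable_fun p /\ computable_fun m /\ computable_fun d /\
    forall X, is_sup_seq (fun n => Qof p m d (code_str (prefix X n))) (t X).

Definition lsc2 (t : cantor -> cantor -> ereal) : Prop :=
  (forall X Y, ele (EFin 0) (t X Y)) /\
  exists p m d, computable_fun p /\ computable_fun m /\ computable_fun d /\
    forall X Y, is_sup_seq
      (fun n => Qof p m d (npair (code_str (prefix X n)) (code_str (prefix Y n)))) (t X Y).

(* int_le mu t s c  <->  \int_{[s]} t dmu <= c.
   The integral of a nonnegative function is the supremum of integrals of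
   nonnegative step functions below it that are constant on cylinders
   [s ++ u], |u| = n (this is the Lebesgue integral for lower semicontinuous t). *)
Definition int_le (mu : list bool -> R) (t : cantor -> ereal) (s : list bool) (c : R) : Prop :=
  forall (n : nat) (f : list bool -> R),
    (forall u, In u (strings n) ->
       0 <= f u /\ forall X, in_cyl (s ++ u) X -> ele (EFin (f u)) (t X)) ->
    sumR (strings n) (fun u => f u * mu (s ++ u)) <= c.

Definition int_le2 (mu : list bool -> list bool -> R) (t : cantor -> cantor -> ereal)
    (s s' : list bool) (c : R) : Prop :=
  forall (n : nat) (f : list bool -> list bool -> R),
    (forall u u', In u (strings n) -> In u' (strings n) ->
       0 <= f u u' /\
       forall X Y, in_cyl (s ++ u) X -> in_cyl (s' ++ u') Y -> ele (EFin (f u u')) (t X Y)) ->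
    sumR (strings n) (fun u => sumR (strings n) (fun u' => f u u' * mu (s ++ u) (s' ++ u'))) <= c.

Definition comp_random (mu : list bool -> R) (X : cantor) : Prop :=
  forall (t : cantor -> ereal) (nu : list bool -> R),
    lsc t -> computable_measure nu ->
    (forall s, int_le mu t s (nu s)) ->
    t X <> EInf.

Definition comp_random2 (mu : list bool -> list bool -> R) (X Y : cantor) : Prop :=
  forall (t : cantor -> cantor -> ereal) (nu : list bool -> list bool -> R),
    lsc2 t -> computable_measure2 nu ->
    (forall s s', int_le2 mu t s s' (nu s s')) ->
    t X Y <> EInf.

(* Main.v *)
Require Import Defs.
From Stdlib Require Import Reals List Arith Lia Lra FunctionalExtensionality.
Import ListNotations.

Module P1.

Definition PR (n : nat) (f : list nat -> nat) : Prop :=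
  exists c, forall v, length v = n -> eval c v (f v).

Lemma PR_ext n f g : PR n f -> (forall v, length v = n -> f v = g v) -> PR n g.
Proof. intros [c H] E. exists c. intros v Hv. rewrite <- E by auto. auto. Qed.

Lemma PR_proj n i : (i < n)%nat -> PR n (fun v => nth i v 0%nat).
Proof. intros H. exists (RProj i). intros v Hv. constructor. lia. Qed.

Lemma PR_zero n : PR n (fun _ => 0%nat).
Proof. exists RZero. intros. constructor. Qed.

Lemma PR_evals n gs : Forall (PR n) gs ->
  exists cs, forall v, length v = n -> evals cs v (map (fun g => g v) gs).
Proof.
  induction 1.
  - exists []. intros. constructor.
  - destruct H as [c Hc]. destruct IHForall as [cs Hcs].
    exists (c :: cs). intros v Hv. simpl. constructor; auto.
Qed.

Lemma PR_comp n h gs : Forall (PR n) gs -> PR (length gs) h ->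
  PR n (fun v => h (map (fun g => g v) gs)).
Proof.
  intros HF [ch Hh]. destruct (PR_evals n gs HF) as [cs Hcs].
  exists (RComp ch cs). intros v Hv. econstructor. apply Hcs; auto.
  apply Hh. rewrite length_map; auto.
Qed.

Lemma PR_succ n f : PR n f -> PR n (fun v => S (f v)).
Proof.
  intros [c Hc]. exists (RComp RSucc [c]). intros v Hv. econstructor.
  constructor. apply Hc; auto. constructor. constructor.
Qed.

Lemma PR_rec n f g (h : list nat -> nat) : PR n f -> PR (S (S n)) g ->
  (forall w, length w = n -> h (0%nat :: w) = f w) ->
  (forall k w, length w = n -> h (S k :: w) = g (k :: h (k :: w) :: w)) ->
  PR (S n) h.
Proof.
  intros [cf Hf] [cg Hg] H0 HS. exists (RPrec cf cg).
  intros v Hv. destruct v as [|x w]; [discriminate|]. simpl in Hv. injection Hv as Hv.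
  induction x.
  - rewrite H0 by auto. constructor. auto.
  - rewrite HS by auto. econstructor. apply IHx. apply Hg. simpl. lia.
Qed.

Lemma PR_comp1 n h f : PR 1 h -> PR n f -> PR n (fun v => h [f v]).
Proof. intros Hh Hf. apply (PR_comp n h [f]); auto. Qed.
Lemma PR_comp2 n h f g : PR 2 h -> PR n f -> PR n g -> PR n (fun v => h [f v; g v]).
Proof. intros Hh Hf Hg. apply (PR_comp n h [f; g]); auto. Qed.
Lemma PR_comp3 n h f g k : PR 3 h -> PR n f -> PR n g -> PR n k -> PR n (fun v => h [f v; g v; k v]).
Proof. intros Hh Hf Hg Hk. apply (PR_comp n h [f; g; k]); auto. Qed.

Definition a0 (v : list nat) := nth 0 v 0%nat.
Definition a1 (v : list nat) := nth 1 v 0%nat.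
Definition a2 (v : list nat) := nth 2 v 0%nat.

Ltac len_destr :=
  let v := fresh "v" in let Hv := fresh "Hv" in
  intros v Hv; repeat (destruct v as [|? v]; simpl in Hv; try discriminate); try reflexivity.

Lemma PR_add : PR 2 (fun v => a0 v + a1 v)%nat.
Proof.
  apply (PR_rec 1 a0 (fun v => S (a1 v))).
  - apply PR_proj; lia.
  - apply PR_succ, PR_proj; lia.
  - len_destr.
  - intros k w Hw. destruct w as [|y [|]]; simpl in Hw; try discriminate. reflexivity.
Qed.

Lemma PR_mul : PR 2 (fun v => a0 v * a1 v)%nat.
Proof.
  apply (PR_rec 1 (fun _ => 0%nat) (fun v => a1 v + a2 v)%nat).
  - apply PR_zero.
  - eapply PR_ext. apply PR_comp2 with (h := fun v => (a0 v + a1 v)%nat).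
    apply PR_add. apply (PR_proj 3 1); lia. apply (PR_proj 3 2); lia.
    intros. reflexivity.
  - len_destr.
  - intros k w Hw. destruct w as [|y [|]]; simpl in Hw; try discriminate.
    unfold a0, a1, a2; simpl. lia.
Qed.

Lemma PR_pred : PR 1 (fun v => pred (a0 v)).
Proof.
  apply (PR_rec 0 (fun _ => 0%nat) a0).
  - apply PR_zero.
  - apply PR_proj; lia.
  - len_destr.
  - intros k w Hw. destruct w; try discriminate. reflexivity.
Qed.

Lemma PR_rsub : PR 2 (fun v => a1 v - a0 v)%nat.
Proof.
  apply (PR_rec 1 a0 (fun v => pred (a1 v))).
  - apply PR_proj; lia.
  - apply (PR_comp1 3 (fun v => pred (a0 v)) a1). apply PR_pred. apply PR_proj; lia.
  - len_destr. unfold a1, a0; simpl; lia.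
  - intros k w Hw. destruct w as [|y [|]]; simpl in Hw; try discriminate.
    unfold a0, a1; simpl. lia.
Qed.

Lemma PR_sub : PR 2 (fun v => a0 v - a1 v)%nat.
Proof.
  eapply PR_ext. apply (PR_comp2 2 (fun v => a1 v - a0 v)%nat a1 a0).
  apply PR_rsub. apply PR_proj; lia. apply PR_proj; lia. intros; reflexivity.
Qed.

Lemma PR_ifz : PR 3 (fun v => match a0 v with O => a1 v | S _ => a2 v end).
Proof.
  apply (PR_rec 2 a0 (fun v => nth 3 v 0%nat)).
  - apply PR_proj; lia.
  - apply PR_proj; lia.
  - len_destr.
  - intros k w Hw. destruct w as [|y [|z []]]; simpl in Hw; try discriminate. reflexivity.
Qed.

Lemma PR_odd : PR 1 (fun v => Nat.b2n (Nat.odd (a0 v))).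
Proof.
  apply (PR_rec 0 (fun _ => 0%nat) (fun v => 1 - a1 v)%nat).
  - apply PR_zero.
  - eapply PR_ext. apply (PR_comp2 2 (fun v => a0 v - a1 v)%nat (fun _ => 1%nat) a1).
    apply PR_sub. apply PR_succ, PR_zero. apply PR_proj; lia. intros; reflexivity.
  - len_destr.
  - intros k w Hw. destruct w; try discriminate. unfold a0, a1; simpl.
    rewrite Nat.odd_succ, <- Nat.negb_odd. destruct (Nat.odd k); reflexivity.
Qed.

Lemma PR_div2 : PR 1 (fun v => Nat.div2 (a0 v)).
Proof.
  apply (PR_rec 0 (fun _ => 0%nat) (fun v => a1 v + Nat.b2n (Nat.odd (a0 v)))%nat).
  - apply PR_zero.
  - eapply PR_ext. apply (PR_comp2 2 (fun v => a0 v + a1 v)%nat a1 (fun v => Nat.b2n (Nat.odd (a0 v)))).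
    apply PR_add. apply PR_proj; lia.
    apply (PR_comp1 2 (fun v => Nat.b2n (Nat.odd (a0 v))) a0). apply PR_odd. apply PR_proj; lia.
    intros; reflexivity.
  - len_destr.
  - intros k w Hw. destruct w; try discriminate. unfold a0, a1; simpl.
    pose proof (Nat.div2_odd (S k)). pose proof (Nat.div2_odd k).
    rewrite Nat.odd_succ, <- Nat.negb_odd in H. destruct (Nat.odd k); simpl in *; lia.
Qed.

Fixpoint bsum (n : nat) (f : nat -> nat) : nat :=
  match n with O => O | S k => (bsum k f + f k)%nat end.
Fixpoint bprod (n : nat) (f : nat -> nat) : nat :=
  match n with O => 1%nat | S k => (bprod k f * f k)%nat end.

Lemma PR_bsum1 g : PR 2 g -> PR 2 (fun v => bsum (a0 v) (fun i => g [i; a1 v])).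
Proof.
  intros Hg.
  apply (PR_rec 1 (fun _ => 0%nat) (fun v => a1 v + g [a0 v; a2 v])%nat).
  - apply PR_zero.
  - apply (PR_comp2 3 (fun v => a0 v + a1 v)%nat). apply PR_add. apply PR_proj; lia.
    apply PR_comp2; auto; apply PR_proj; lia.
  - len_destr.
  - intros k w Hw. destruct w as [|y [|]]; simpl in Hw; try discriminate. reflexivity.
Qed.

Lemma PR_bprod1 g : PR 2 g -> PR 2 (fun v => bprod (a0 v) (fun i => g [i; a1 v])).
Proof.
  intros Hg.
  apply (PR_rec 1 (fun _ => 1%nat) (fun v => a1 v * g [a0 v; a2 v])%nat).
  - apply PR_succ, PR_zero.
  - apply (PR_comp2 3 (fun v => a0 v * a1 v)%nat). apply PR_mul. apply PR_proj; lia.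
    apply PR_comp2; auto; apply PR_proj; lia.
  - len_destr.
  - intros k w Hw. destruct w as [|y [|]]; simpl in Hw; try discriminate. reflexivity.
Qed.

Lemma PR_iter1 g : PR 1 g -> PR 2 (fun v => Nat.iter (a0 v) (fun x => g [x]) (a1 v)).
Proof.
  intros Hg.
  apply (PR_rec 1 a0 (fun v => g [a1 v])).
  - apply PR_proj; lia.
  - apply PR_comp1; auto; apply PR_proj; lia.
  - len_destr.
  - intros k w Hw. destruct w as [|y [|]]; simpl in Hw; try discriminate. reflexivity.
Qed.

End P1.
Import P1.
Module P2.

Definition tri (n : nat) : nat := Nat.div2 (n * S n).

Lemma tri_S n : tri (S n) = (tri n + S n)%nat.
Proof.
  unfold tri. rewrite !Nat.div2_div.
  replace (S n * S (S n))%nat with (n * S n + S n * 2)%nat by lia.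
  rewrite Nat.div_add by lia. reflexivity.
Qed.

Lemma tri_mono a b : (a <= b)%nat -> (tri a <= tri b)%nat.
Proof. induction 1; auto. rewrite tri_S. lia. Qed.

Lemma tri_ge n : (n <= tri n)%nat.
Proof. induction n; [unfold tri; simpl; lia|]. rewrite tri_S. lia. Qed.

Lemma npair_tri x y : npair x y = (tri (x + y) + y)%nat.
Proof. unfold npair, tri. rewrite Nat.div2_div. f_equal. f_equal. lia. Qed.

Definition leind (a b : nat) : nat := (1 - (a - b))%nat.

Definition wc (z : nat) : nat := bsum z (fun i => leind (tri (S i)) z).
Definition sndc (z : nat) : nat := (z - tri (wc z))%nat.
Definition fstc (z : nat) : nat := (wc z - sndc z)%nat.

Lemma bsum_ext n f g : (forall i, (i < n)%nat -> f i = g i) -> bsum n f = bsum n g.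
Proof. induction n; simpl; intros; auto. rewrite IHn, H; auto. Qed.

Lemma bprod_ext n f g : (forall i, (i < n)%nat -> f i = g i) -> bprod n f = bprod n g.
Proof. induction n; simpl; intros; auto. rewrite IHn, H; auto. Qed.

Lemma bsum_ind_min z W : bsum z (fun i => if (S i <=? W)%nat then 1%nat else 0%nat) = Nat.min z W.
Proof.
  induction z; cbn [bsum]; auto. rewrite IHz.
  destruct (Nat.leb_spec (S z) W); lia.
Qed.

Lemma wc_npair x y : wc (npair x y) = (x + y)%nat.
Proof.
  unfold wc. set (z := npair x y).
  rewrite (bsum_ext _ _ (fun i => if (S i <=? x + y)%nat then 1%nat else 0%nat)).
  - rewrite bsum_ind_min. subst z. rewrite npair_tri. pose proof (tri_ge (x+y)). lia.
  - intros i _. unfold leind. subst z. rewrite npair_tri.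
    destruct (Nat.leb_spec (S i) (x+y)).
    + pose proof (tri_mono _ _ H). lia.
    + assert (tri (S (x+y)) <= tri (S i))%nat by (apply tri_mono; lia).
      rewrite tri_S in H0. lia.
Qed.

Lemma sndc_npair x y : sndc (npair x y) = y.
Proof. unfold sndc. rewrite wc_npair, npair_tri. lia. Qed.

Lemma fstc_npair x y : fstc (npair x y) = x.
Proof. unfold fstc. rewrite wc_npair, sndc_npair. lia. Qed.

Definition CC (f : nat -> nat) : Prop := PR 1 (fun v => f (a0 v)).

Lemma C_ext f g : CC f -> (forall z, f z = g z) -> CC g.
Proof. intros H E. eapply PR_ext; eauto. intros; simpl; auto. Qed.

Lemma C_lift2 h f g : PR 2 h -> CC f -> CC g -> CC (fun z => h [f z; g z]).
Proof. intros Hh Hf Hg. apply (PR_comp2 1 h); auto. Qed.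
Lemma C_lift1 h f : PR 1 h -> CC f -> CC (fun z => h [f z]).
Proof. intros Hh Hf. apply (PR_comp1 1 h); auto. Qed.
Lemma C_lift3 h f g k : PR 3 h -> CC f -> CC g -> CC k -> CC (fun z => h [f z; g z; k z]).
Proof. intros Hh Hf Hg Hk. apply (PR_comp3 1 h); auto. Qed.

Lemma C_id : CC (fun z => z).
Proof. apply PR_proj; lia. Qed.
Lemma C_zero : CC (fun _ => 0%nat).
Proof. apply PR_zero. Qed.
Lemma C_succ f : CC f -> CC (fun z => S (f z)).
Proof. apply PR_succ. Qed.
Lemma C_const k : CC (fun _ => k).
Proof. induction k. apply C_zero. apply C_succ; auto. Qed.
Lemma C_add f g : CC f -> CC g -> CC (fun z => f z + g z)%nat.
Proof. intros. apply (C_lift2 _ f g PR_add); auto. Qed.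
Lemma C_mul f g : CC f -> CC g -> CC (fun z => f z * g z)%nat.
Proof. intros. apply (C_lift2 _ f g PR_mul); auto. Qed.
Lemma C_sub f g : CC f -> CC g -> CC (fun z => f z - g z)%nat.
Proof. intros. apply (C_lift2 _ f g PR_sub); auto. Qed.
Lemma C_pred f : CC f -> CC (fun z => pred (f z)).
Proof. intros. apply (C_lift1 _ f PR_pred); auto. Qed.
Lemma C_odd f : CC f -> CC (fun z => Nat.b2n (Nat.odd (f z))).
Proof. intros. apply (C_lift1 _ f PR_odd); auto. Qed.
Lemma C_div2 f : CC f -> CC (fun z => Nat.div2 (f z)).
Proof. intros. apply (C_lift1 _ f PR_div2); auto. Qed.
Lemma C_ifz f g h : CC f -> CC g -> CC h -> CC (fun z => match f z with O => g z | S _ => h z end).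
Proof. intros. apply (C_lift3 _ f g h PR_ifz); auto. Qed.
Lemma C_if_le f g h k : CC f -> CC g -> CC h -> CC k ->
  CC (fun z => if (f z <=? g z)%nat then h z else k z).
Proof.
  intros. eapply C_ext. apply (C_ifz (fun z => f z - g z)%nat h k); auto. apply C_sub; auto.
  intros z. simpl. destruct (Nat.leb_spec (f z) (g z)).
  - replace (f z - g z)%nat with 0%nat by lia. auto.
  - destruct (f z - g z)%nat eqn:E; [lia|auto].
Qed.
Lemma C_if_lt f g h k : CC f -> CC g -> CC h -> CC k ->
  CC (fun z => if (f z <? g z)%nat then h z else k z).
Proof.
  intros. eapply C_ext. apply (C_if_le (fun z => S (f z)) g h k); auto. apply C_succ; auto.
  intros z. reflexivity.
Qed.
Lemma C_if_eq f g h k : CC f -> CC g -> CC h -> CC k ->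
  CC (fun z => if (f z =? g z)%nat then h z else k z).
Proof.
  intros. eapply C_ext. apply (C_if_le f g (fun z => if (g z <=? f z)%nat then h z else k z) k); auto.
  apply C_if_le; auto.
  intros z. simpl. destruct (Nat.leb_spec (f z) (g z)); destruct (Nat.leb_spec (g z) (f z));
  destruct (Nat.eqb_spec (f z) (g z)); auto; lia.
Qed.
Lemma C_tri f : CC f -> CC (fun z => tri (f z)).
Proof. intros. unfold tri. apply C_div2, C_mul, C_succ; auto. Qed.
Lemma C_npair f g : CC f -> CC g -> CC (fun z => npair (f z) (g z)).
Proof.
  intros. eapply C_ext. apply (C_add (fun z => tri (f z + g z)) g); auto. apply C_tri, C_add; auto.
  intros; rewrite npair_tri; auto.
Qed.

Lemma PR_npair : PR 2 (fun v => npair (a0 v) (a1 v)).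
Proof.
  unfold npair. eapply PR_ext.
  apply (PR_comp2 2 (fun v => a0 v + a1 v)%nat (fun v => Nat.div2 ((a0 v + a1 v) * S (a0 v + a1 v))) a1).
  apply PR_add.
  apply (PR_comp1 2 (fun v => Nat.div2 (a0 v))). apply PR_div2.
  apply (PR_comp2 2 (fun v => a0 v * a1 v)%nat). apply PR_mul. apply PR_add.
  apply PR_succ, PR_add. apply PR_proj; lia.
  intros v Hv. destruct v as [|x [|y []]]; simpl in Hv; try discriminate.
  unfold a0, a1; simpl nth. rewrite Nat.div2_div. replace (x+y+1)%nat with (S (x+y)) by lia. reflexivity.
Qed.

Lemma C_bsum0 (E : nat -> nat) N : CC E -> CC N -> CC (fun z => bsum (N z) (fun i => E (npair i z))).
Proof.
  intros HE HN.
  assert (H : PR 2 (fun v => bsum (a0 v) (fun i => (fun w => E (npair (a0 w) (a1 w))) [i; a1 v]))).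
  { apply (PR_bsum1 (fun w => E (npair (a0 w) (a1 w)))). apply (PR_comp1 2 (fun v => E (a0 v))); auto. apply PR_npair. }
  eapply C_ext. apply (C_lift2 _ N (fun z => z) H); auto. apply C_id. intros; reflexivity.
Qed.

Lemma C_bprod0 (E : nat -> nat) N : CC E -> CC N -> CC (fun z => bprod (N z) (fun i => E (npair i z))).
Proof.
  intros HE HN.
  assert (H : PR 2 (fun v => bprod (a0 v) (fun i => (fun w => E (npair (a0 w) (a1 w))) [i; a1 v]))).
  { apply (PR_bprod1 (fun w => E (npair (a0 w) (a1 w)))). apply (PR_comp1 2 (fun v => E (a0 v))); auto. apply PR_npair. }
  eapply C_ext. apply (C_lift2 _ N (fun z => z) H); auto. apply C_id. intros; reflexivity.
Qed.

Lemma C_bsum (E : nat -> nat -> nat) N : CC (fun w => E (fstc w) (sndc w)) -> CC N ->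
  CC (fun z => bsum (N z) (fun i => E i z)).
Proof.
  intros HE HN. eapply C_ext. apply (C_bsum0 _ N HE HN).
  intros z. apply bsum_ext. intros. rewrite fstc_npair, sndc_npair. auto.
Qed.

Lemma C_bprod (E : nat -> nat -> nat) N : CC (fun w => E (fstc w) (sndc w)) -> CC N ->
  CC (fun z => bprod (N z) (fun i => E i z)).
Proof.
  intros HE HN. eapply C_ext. apply (C_bprod0 _ N HE HN).
  intros z. apply bprod_ext. intros. rewrite fstc_npair, sndc_npair. auto.
Qed.

Lemma C_iter (g : nat -> nat) f x : CC g -> CC f -> CC x -> CC (fun z => Nat.iter (f z) g (x z)).
Proof.
  intros Hg Hf Hx.
  assert (H := PR_iter1 _ Hg).
  eapply C_ext. apply (C_lift2 _ f x H); auto. intros; reflexivity.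
Qed.

Lemma Pn_sub n f g : PR n f -> PR n g -> PR n (fun v => f v - g v)%nat.
Proof. intros. apply (PR_comp2 n _ f g PR_sub); auto. Qed.
Lemma Pn_mul n f g : PR n f -> PR n g -> PR n (fun v => f v * g v)%nat.
Proof. intros. apply (PR_comp2 n _ f g PR_mul); auto. Qed.
Lemma Pn_div2 n f : PR n f -> PR n (fun v => Nat.div2 (f v)).
Proof. intros. apply (PR_comp1 n _ f PR_div2); auto. Qed.
Lemma Pn_const n k : PR n (fun _ => k).
Proof. induction k. apply PR_zero. apply PR_succ; auto. Qed.

Lemma C_wc : CC wc.
Proof.
  unfold wc.
  assert (HP : PR 2 (fun v => leind (tri (S (a0 v))) (a1 v))).
  { unfold leind, tri. apply Pn_sub. apply Pn_const. apply Pn_sub.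
    apply Pn_div2, Pn_mul; apply PR_succ. apply PR_proj; lia. apply PR_succ, PR_proj; lia.
    apply PR_proj; lia. }
  eapply C_ext. apply (C_lift2 _ (fun z => z) (fun z => z) (PR_bsum1 _ HP)).
  apply C_id. apply C_id. intros; reflexivity.
Qed.

Lemma C_comp f g : CC f -> CC g -> CC (fun z => f (g z)).
Proof. intros Hf Hg. apply (PR_comp1 1 (fun v => f (a0 v)) (fun v => g (a0 v))); auto. Qed.

Lemma C_fst f : CC f -> CC (fun z => fstc (f z)).
Proof.
  intros Hf. apply (C_comp fstc f); auto. unfold fstc, sndc.
  apply C_sub. apply C_wc. apply C_sub. apply C_id. apply C_tri, C_wc.
Qed.
Lemma C_snd f : CC f -> CC (fun z => sndc (f z)).
Proof.
  intros Hf. apply (C_comp sndc f); auto. unfold sndc.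
  apply C_sub. apply C_id. apply C_tri, C_wc.
Qed.

Lemma C_cf p f : computable_fun p -> CC f -> CC (fun z => p (f z)).
Proof.
  intros [c Hc] Hf. apply (C_comp p f); auto. exists c. intros v Hv.
  destruct v as [|x [|]]; simpl in Hv; try discriminate. apply Hc.
Qed.

Lemma C_computable f : CC f -> computable_fun f.
Proof. intros [c Hc]. exists c. intros n. apply (Hc [n]). reflexivity. Qed.

End P2.
Import P2.
Module P3.

Definition tlc (c : nat) : nat := Nat.div2 (pred c).
Definition tln (i c : nat) : nat := Nat.iter i tlc c.
Definition bitc (i c : nat) : nat := Nat.b2n (Nat.odd (pred (tln i c))).
Definition lenc (c : nat) : nat := bsum c (fun i => if (tln i c =? 0)%nat then 0%nat else 1%nat).
Definition tb (t k : nat) : nat := Nat.b2n (Nat.odd (Nat.iter k Nat.div2 t)).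
Definition pw2 (p : nat) : nat := Nat.iter p (fun x => x + x)%nat 1%nat.

Lemma pw2_pow p : pw2 p = (2 ^ p)%nat.
Proof. induction p; simpl; auto. unfold pw2 in *. simpl. rewrite IHp. lia. Qed.

Ltac Csolve := repeat (cbv beta; first [ apply C_id | apply C_const | apply C_add | apply C_mul
  | apply C_sub | apply C_succ | apply C_pred | apply C_div2 | apply C_odd | apply C_if_le
  | apply C_if_lt | apply C_if_eq | apply C_npair | apply C_fst | apply C_snd | apply C_tri
  | apply C_bsum | apply C_bprod ]).

Lemma C_tlc f : CC f -> CC (fun z => tlc (f z)).
Proof. intros. unfold tlc. Csolve. auto. Qed.
Lemma C_tln f g : CC f -> CC g -> CC (fun z => tln (f z) (g z)).
Proof. intros. unfold tln. apply C_iter; auto. apply C_tlc, C_id. Qed.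
Lemma C_bitc f g : CC f -> CC g -> CC (fun z => bitc (f z) (g z)).
Proof. intros. unfold bitc. apply C_odd, C_pred, C_tln; auto. Qed.
Lemma C_lenc f : CC f -> CC (fun z => lenc (f z)).
Proof.
  intros. apply (C_comp lenc f); auto. unfold lenc. apply C_bsum. 
  apply C_if_eq. apply C_tln. apply C_fst, C_id. apply C_snd, C_id. all: try apply C_const. apply C_id.
Qed.
Lemma C_tb f g : CC f -> CC g -> CC (fun z => tb (f z) (g z)).
Proof. intros. unfold tb. apply C_odd. apply C_iter; auto. apply C_div2, C_id. Qed.
Lemma C_pw2 f : CC f -> CC (fun z => pw2 (f z)).
Proof. intros. unfold pw2. apply C_iter; auto. apply C_add; apply C_id. apply C_const. Qed.

Ltac Csolve2 := repeat (cbv beta; first [ assumption | apply C_id | apply C_const | apply C_add | apply C_mul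
  | apply C_sub | apply C_succ | apply C_pred | apply C_div2 | apply C_odd | apply C_if_le
  | apply C_if_lt | apply C_if_eq | apply C_npair | apply C_fst | apply C_snd | apply C_tri
  | apply C_bsum | apply C_bprod | apply C_tlc | apply C_tln | apply C_bitc | apply C_lenc
  | apply C_tb | apply C_pw2 | (apply C_cf; [assumption|]) ]).

Ltac cstep := cbv beta; match goal with
 | |- CC (fun _ => ?k) => apply (C_const k)
 | |- CC (fun z => z) => apply C_id
 | |- CC (fun z => (@?f z + @?g z)%nat) => apply (C_add f g)
 | |- CC (fun z => (@?f z * @?g z)%nat) => apply (C_mul f g)
 | |- CC (fun z => (@?f z - @?g z)%nat) => apply (C_sub f g)
 | |- CC (fun z => S (@?f z)) => apply (C_succ f)
 | |- CC (fun z => pred (@?f z)) => apply (C_pred f)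
 | |- CC (fun z => Nat.div2 (@?f z)) => apply (C_div2 f)
 | |- CC (fun z => Nat.b2n (Nat.odd (@?f z))) => apply (C_odd f)
 | |- CC (fun z => if (@?f z <=? @?g z)%nat then @?h z else @?k z) => apply (C_if_le f g h k)
 | |- CC (fun z => if (@?f z <? @?g z)%nat then @?h z else @?k z) => apply (C_if_lt f g h k)
 | |- CC (fun z => if (@?f z =? @?g z)%nat then @?h z else @?k z) => apply (C_if_eq f g h k)
 | |- CC (fun z => npair (@?f z) (@?g z)) => apply (C_npair f g)
 | |- CC (fun z => fstc (@?f z)) => apply (C_fst f)
 | |- CC (fun z => sndc (@?f z)) => apply (C_snd f)
 | |- CC (fun z => tri (@?f z)) => apply (C_tri f)
 | |- CC (fun z => bsum (@?N z) (fun i => @?E i z)) => apply (C_bsum E N)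
 | |- CC (fun z => bprod (@?N z) (fun i => @?E i z)) => apply (C_bprod E N)
 | |- CC (fun z => tlc (@?f z)) => apply (C_tlc f)
 | |- CC (fun z => tln (@?f z) (@?g z)) => apply (C_tln f g)
 | |- CC (fun z => bitc (@?f z) (@?g z)) => apply (C_bitc f g)
 | |- CC (fun z => lenc (@?f z)) => apply (C_lenc f)
 | |- CC (fun z => tb (@?f z) (@?g z)) => apply (C_tb f g)
 | |- CC (fun z => pw2 (@?f z)) => apply (C_pw2 f)
 | |- CC (fun z => ?g (@?f z)) => apply (C_comp g f); [assumption|]
 | |- CC (fun z => ?p (@?f z)) => apply (C_cf p f); [assumption|]
 | |- CC ?f => lazymatch f with (fun _ => _) => fail | _ => change (CC (fun z => f z)) end
 end.
Ltac csolve := repeat cstep.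


Lemma code_tl b l : tlc (code_str (b :: l)) = code_str l.
Proof.
  unfold tlc. cbn [code_str pred]. destruct b.
  - replace (2 * code_str l + 1)%nat with (S (2 * code_str l)) by lia. apply Nat.div2_succ_double.
  - replace (2 * code_str l + 0)%nat with (2 * code_str l)%nat by lia. apply Nat.div2_double.
Qed.

Lemma tln_code i l : tln i (code_str l) = code_str (skipn i l).
Proof.
  revert l. induction i; intros l; auto.
  unfold tln in *. rewrite Nat.iter_succ_r. destruct l as [|b l].
  - specialize (IHi []). cbn [code_str skipn] in *. destruct i; exact IHi.
  - rewrite code_tl. apply IHi.
Qed.

Lemma code_zero l : code_str l = 0%nat <-> l = [].
Proof. destruct l; simpl; split; intros; try discriminate; auto. Qed.

Lemma bitc_code i l : (i < length l)%nat -> bitc i (code_str l) = Nat.b2n (nth i l false).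
Proof.
  intros H. unfold bitc. rewrite tln_code.
  assert (E : nth i l false = hd false (skipn i l)).
  { revert i H. induction l; intros i H; simpl in H. lia. destruct i; simpl; auto. apply IHl. lia. }
  rewrite E. destruct (skipn i l) eqn:Es.
  - apply (f_equal (@length bool)) in Es. rewrite length_skipn in Es. simpl in Es. lia.
  - simpl. destruct b; simpl.
    + replace (code_str l0 + (code_str l0 + 0) + 1)%nat with (S (2 * code_str l0))%nat by lia.
      rewrite Nat.odd_succ, Nat.even_mul. reflexivity.
    + replace (code_str l0 + (code_str l0 + 0) + 0)%nat with (2 * code_str l0)%nat by lia.
      rewrite Nat.odd_mul. reflexivity.
Qed.

Lemma code_ge_len l : (length l <= code_str l)%nat.
Proof. induction l; simpl; lia. Qed.

Lemma lenc_code l : lenc (code_str l) = length l.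
Proof.
  unfold lenc.
  rewrite (bsum_ext _ _ (fun i => if (S i <=? length l)%nat then 1%nat else 0%nat)).
  - rewrite bsum_ind_min. pose proof (code_ge_len l). lia.
  - intros i _. rewrite tln_code. destruct (Nat.leb_spec (S i) (length l)).
    + destruct (skipn i l) eqn:E.
      * apply (f_equal (@length bool)) in E. rewrite length_skipn in E. simpl in E. lia.
      * simpl. reflexivity.
    + rewrite skipn_all2 by lia. reflexivity.
Qed.

Lemma bsum_shift n f : bsum (S n) f = (f 0%nat + bsum n (fun i => f (S i)))%nat.
Proof. induction n; cbn [bsum] in *. lia. rewrite IHn. lia. Qed.

Lemma bsum_mul_l n k f : (k * bsum n f)%nat = bsum n (fun i => k * f i)%nat.
Proof. induction n; simpl; lia. Qed.

Lemma code_sum l : code_str l = bsum (length l) (fun p => 2 ^ p * (1 + Nat.b2n (nth p l false)))%nat.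
Proof.
  induction l as [|b l IH]; auto.
  simpl length. rewrite bsum_shift. simpl nth.
  rewrite (bsum_ext _ _ (fun i => 2 * (2 ^ i * (1 + Nat.b2n (nth i l false))))%nat).
  - rewrite <- bsum_mul_l, <- IH. simpl. destruct b; simpl; lia.
  - intros. simpl. lia.
Qed.

Lemma length_prefix X n : length (prefix X n) = n.
Proof. induction n; simpl; auto. rewrite length_app, IHn. simpl. lia. Qed.

Lemma nth_prefix X n i : (i < n)%nat -> nth i (prefix X n) false = X i.
Proof.
  induction n; intros H. lia. simpl.
  destruct (Nat.lt_ge_cases i n).
  - rewrite app_nth1 by (rewrite length_prefix; auto). auto.
  - assert (i = n) by lia. subst. rewrite app_nth2; rewrite length_prefix; auto.
    rewrite Nat.sub_diag. reflexivity.
Qed.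

Lemma code_prefix X n : code_str (prefix X n) = bsum n (fun p => 2 ^ p * (1 + Nat.b2n (X p)))%nat.
Proof.
  rewrite code_sum, length_prefix. apply bsum_ext. intros. rewrite nth_prefix; auto.
Qed.

End P3.
Import P3.
Module P4.
Open Scope R_scope.

Lemma sumR_nil {A} (f : A -> R) : sumR [] f = 0.
Proof. reflexivity. Qed.
Lemma sumR_cons {A} a l (f : A -> R) : sumR (a :: l) f = f a + sumR l f.
Proof. reflexivity. Qed.
Lemma sumR_app {A} l1 l2 (f : A -> R) : sumR (l1 ++ l2) f = sumR l1 f + sumR l2 f.
Proof. induction l1; simpl; [ring|]. unfold sumR in *. simpl. rewrite IHl1. ring. Qed.
Lemma sumR_ext {A} l (f g : A -> R) : (forall a, In a l -> f a = g a) -> sumR l f = sumR l g.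
Proof. induction l; intros H; simpl; auto. unfold sumR in *; simpl. rewrite H, IHl; simpl; auto. intros; apply H; simpl; auto. Qed.
Lemma sumR_plus {A} l (f g : A -> R) : sumR l (fun a => f a + g a) = sumR l f + sumR l g.
Proof. induction l; unfold sumR in *; simpl; [ring|]. rewrite IHl. ring. Qed.
Lemma sumR_scal {A} l c (f : A -> R) : sumR l (fun a => c * f a) = c * sumR l f.
Proof. induction l; unfold sumR in *; simpl; [ring|]. rewrite IHl. ring. Qed.
Lemma sumR_scal_r {A} l c (f : A -> R) : sumR l (fun a => f a * c) = sumR l f * c.
Proof. induction l; unfold sumR in *; simpl; [ring|]. rewrite IHl. ring. Qed.
Lemma sumR_swap {A B} (l1 : list A) (l2 : list B) F :
  sumR l1 (fun a => sumR l2 (fun b => F a b)) = sumR l2 (fun b => sumR l1 (fun a => F a b)).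
Proof.
  induction l1; simpl.
  - unfold sumR. induction l2; simpl; auto. rewrite <- IHl2. ring.
  - change (sumR (a :: l1) (fun a0 => sumR l2 (fun b => F a0 b))) with
      (sumR l2 (fun b => F a b) + sumR l1 (fun a0 => sumR l2 (fun b => F a0 b))).
    rewrite IHl1, <- sumR_plus. apply sumR_ext. intros. reflexivity.
Qed.
Lemma sumR_le {A} l (f g : A -> R) : (forall a, In a l -> f a <= g a) -> sumR l f <= sumR l g.
Proof. induction l; intros H; unfold sumR in *; simpl; [lra|]. apply Rplus_le_compat; auto. apply H; simpl; auto. apply IHl. intros; apply H; simpl; auto. Qed.
Lemma sumR_nonneg {A} l (f : A -> R) : (forall a, In a l -> 0 <= f a) -> 0 <= sumR l f.
Proof. intros H. replace 0 with (sumR l (fun _ => 0)). apply sumR_le; auto. induction l; unfold sumR in *; simpl; auto. rewrite IHl; auto. ring. intros; apply H; simpl; auto. Qed.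
Lemma sumR_flat_map {A B} (g : A -> list B) l f :
  sumR (flat_map g l) f = sumR l (fun a => sumR (g a) f).
Proof. induction l; simpl; auto. rewrite sumR_app, IHl. reflexivity. Qed.
Lemma sumR_map {A B} (g : A -> B) l f : sumR (map g l) f = sumR l (fun a => f (g a)).
Proof. induction l; simpl; auto. unfold sumR in *; simpl; rewrite IHl; auto. Qed.

Lemma sum_strings_S n F :
  sumR (strings (S n)) F = sumR (strings n) (fun s => F (s ++ [false]) + F (s ++ [true])).
Proof. simpl. rewrite sumR_flat_map. apply sumR_ext. intros. unfold sumR; simpl. ring. Qed.

Lemma sum_strings_cons n F :
  sumR (strings (S n)) F = sumR (strings n) (fun s => F (false :: s)) + sumR (strings n) (fun s => F (true :: s)).
Proof.
  revert F. induction n; intros F.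
  - unfold sumR; simpl. ring.
  - rewrite sum_strings_S, IHn. rewrite !sum_strings_S. reflexivity.
Qed.

Lemma strings_len n u : In u (strings n) -> length u = n.
Proof.
  revert u; induction n; intros u H; simpl in H.
  - destruct H as [<-|[]]; auto.
  - apply in_flat_map in H. destruct H as [s [Hs Hu]]. simpl in Hu.
    destruct Hu as [<-|[<-|[]]]; rewrite length_app; simpl; rewrite IHn; auto; lia.
Qed.

Lemma strings_in u : In u (strings (length u)).
Proof.
  induction u using rev_ind; simpl; auto.
  rewrite length_app. simpl. replace (length u + 1)%nat with (S (length u)) by lia. simpl.
  apply in_flat_map. exists u. split; auto. destruct x; simpl; auto.
Qed.

Lemma strings_in' n u : length u = n -> In u (strings n).
Proof. intros <-. apply strings_in. Qed.

Lemma meas_ext (nu : list bool -> R) k r : is_measure nu ->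
  nu r = sumR (strings k) (fun u => nu (r ++ u)).
Proof.
  intros [_ [_ Had]]. induction k.
  - simpl. unfold sumR; simpl. rewrite app_nil_r. ring.
  - rewrite sum_strings_S, IHk. apply sumR_ext. intros. rewrite Had, !app_assoc. reflexivity.
Qed.

Lemma meas_nonneg nu r : is_measure nu -> 0 <= nu r.
Proof. intros [_ [H _]]; auto. Qed.

Fixpoint interleave (a b : list bool) : list bool :=
  match a, b with
  | x :: a', y :: b' => x :: y :: interleave a' b'
  | _, _ => []
  end.

Lemma evens_odds_app u w :
  evens (u ++ w) = evens u ++ (if Nat.even (length u) then evens w else odds w) /\
  odds (u ++ w) = odds u ++ (if Nat.even (length u) then odds w else evens w).
Proof.
  induction u as [|b u IH]; [simpl; auto|].
  cbn [app evens odds]. destruct IH as [H1 H2]. rewrite H1, H2.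
  replace (Nat.even (length (b :: u))) with (negb (Nat.even (length u))).
  destruct (Nat.even (length u)); simpl; auto.
  change (length (b :: u)) with (S (length u)). rewrite Nat.even_succ, <- Nat.negb_even. reflexivity.
Qed.

Lemma evens_app u w : Nat.even (length u) = true -> evens (u ++ w) = evens u ++ evens w.
Proof. intros H. destruct (evens_odds_app u w) as [E _]. rewrite E, H. auto. Qed.
Lemma odds_app u w : Nat.even (length u) = true -> odds (u ++ w) = odds u ++ odds w.
Proof. intros H. destruct (evens_odds_app u w) as [_ E]. rewrite E, H. auto. Qed.

Lemma evens_interleave a b : length a = length b -> evens (interleave a b) = a /\ odds (interleave a b) = b.
Proof.
  revert b; induction a as [|x a IH]; intros [|y b] H; simpl in *; try discriminate; auto.
  destruct (IH b) as [H1 H2]; [lia|]. rewrite H1, H2; auto.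
Qed.

Lemma length_interleave a b : length a = length b -> length (interleave a b) = (2 * length a)%nat.
Proof.
  revert b; induction a as [|x a IH]; intros [|y b] H; simpl in *; try discriminate; auto.
  rewrite IH; lia.
Qed.

Lemma evens_odds_len u : length (evens u) = Nat.div2 (S (length u)) /\ length (odds u) = Nat.div2 (length u).
Proof.
  induction u as [|b u IH]; simpl; auto. destruct IH as [H1 H2]. rewrite H1, H2. auto.
Qed.

Lemma interleave_evens_odds u : Nat.even (length u) = true -> interleave (evens u) (odds u) = u.
Proof.
  intros H. remember (length u) as n eqn:En. revert u En H.
  induction n as [n IH] using lt_wf_ind; intros u En H.
  destruct u as [|x [|y u]]; simpl in *; auto.
  - subst. discriminate.
  - f_equal. f_equal. apply (IH (length u)); auto. lia. subst. simpl in H. auto.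
Qed.

Lemma interleave_snoc a b x y : length a = length b ->
  interleave (a ++ [x]) (b ++ [y]) = interleave a b ++ [x; y].
Proof.
  revert b; induction a as [|x' a IH]; intros [|y' b] H; simpl in *; try discriminate; auto.
  rewrite IH; auto.
Qed.

Lemma nth_evens_odds u : (forall i, nth i (evens u) false = nth (2 * i) u false) /\
  (forall i, nth i (odds u) false = nth (S (2 * i)) u false).
Proof.
  induction u as [|b u [IH1 IH2]]; simpl.
  - split; intros [|i]; auto.
  - split; intros [|i]; simpl; auto.
    + rewrite IH2. f_equal. lia.
Qed.

End P4.
Import P4.
Module P5.
Open Scope R_scope.

Lemma even_2n n : Nat.even (2 * n) = true.
Proof. rewrite Nat.even_mul. reflexivity. Qed.
Lemma even_2n1 n : Nat.even (S (2 * n)) = false.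
Proof. rewrite Nat.even_succ, Nat.odd_mul. reflexivity. Qed.

Definition ev (Z : cantor) : cantor := fun n => Z (2 * n)%nat.
Definition od (Z : cantor) : cantor := fun n => Z (S (2 * n)).

Lemma join_ev_od Z : join (ev Z) (od Z) = Z.
Proof.
  apply functional_extensionality. intros n. unfold join, ev, od.
  pose proof (Nat.div2_odd n). destruct (Nat.even n) eqn:E.
  - rewrite <- Nat.negb_even, E in H. simpl in H. f_equal. lia.
  - rewrite <- Nat.negb_even, E in H. simpl in H. f_equal. lia.
Qed.

Lemma ev_join X Y : ev (join X Y) = X.
Proof.
  apply functional_extensionality. intros n. unfold join, ev.
  rewrite even_2n, Nat.div2_double. auto.
Qed.
Lemma od_join X Y : od (join X Y) = Y.
Proof.
  apply functional_extensionality. intros n. unfold join, od.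
  rewrite even_2n1, Nat.div2_succ_double. auto.
Qed.

Lemma in_cyl_app l1 l2 X : in_cyl (l1 ++ l2) X -> in_cyl l1 X.
Proof.
  intros H i Hi. rewrite <- H. rewrite app_nth1; auto. rewrite length_app; lia.
Qed.

Lemma in_cyl_evens w Z : in_cyl w Z -> in_cyl (evens w) (ev Z) /\ in_cyl (odds w) (od Z).
Proof.
  intros H. destruct (nth_evens_odds w) as [H1 H2]. destruct (evens_odds_len w) as [L1 L2].
  split; intros i Hi.
  - rewrite H1. unfold ev. apply H. rewrite L1 in Hi.
    assert (2 * i < S (length w))%nat. { pose proof (Nat.div2_odd (S (length w))). destruct (Nat.odd _); simpl in *; lia. }
    pose proof (Nat.div2_odd (S (length w))). destruct (Nat.odd (S (length w))) eqn:E; simpl in *.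
    + lia.
    + rewrite Nat.odd_succ in E. assert (2 * i <> length w)%nat.
      { intros Heq. rewrite <- Heq, Nat.even_mul in E. discriminate. } lia.
  - rewrite H2. unfold od. apply H. rewrite L2 in Hi.
    pose proof (Nat.div2_odd (length w)). destruct (Nat.odd _); simpl in *; lia.
Qed.

Lemma in_cyl_interleave p q X Y : length p = length q -> in_cyl p X -> in_cyl q Y ->
  in_cyl (interleave p q) (join X Y).
Proof.
  intros HL HX HY i Hi. rewrite length_interleave in Hi by auto.
  destruct (evens_interleave p q HL) as [E1 E2]. destruct (nth_evens_odds (interleave p q)) as [N1 N2].
  destruct (Nat.Even_or_Odd i) as [[j ->]|[j ->]].
  - rewrite <- N1, E1. unfold join. rewrite even_2n, Nat.div2_double. apply HX. lia.
  - replace (2 * j + 1)%nat with (S (2 * j)) by lia. rewrite <- N2, E2. unfold join.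
    rewrite even_2n1, Nat.div2_succ_double. apply HY. lia.
Qed.

Lemma interleave_app p q a b : length p = length q ->
  interleave (p ++ a) (q ++ b) = interleave p q ++ interleave a b.
Proof.
  revert q; induction p as [|x p IH]; intros [|y q] H; simpl in *; try discriminate; auto.
  rewrite IH; auto.
Qed.

Lemma len_evens_2n u n : length u = (2 * n)%nat -> length (evens u) = n /\ length (odds u) = n.
Proof.
  intros H. destruct (evens_odds_len u) as [L1 L2]. rewrite L1, L2, H.
  rewrite Nat.div2_succ_double, Nat.div2_double. auto.
Qed.


Lemma sum_strings_SS n F : sumR (strings (S (S n))) F =
  sumR (strings n) (fun s => (F (s ++ [false; false]) + F (s ++ [false; true])) +
                             (F (s ++ [true; false]) + F (s ++ [true; true]))).
Proof.
  rewrite sum_strings_S, sum_strings_S. apply sumR_ext. intros. rewrite <- !app_assoc. reflexivity.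
Qed.

Lemma sum_strings_evens n G :
  sumR (strings (2 * n)) (fun u => G (evens u) (odds u)) =
  sumR (strings n) (fun a => sumR (strings n) (fun b => G a b)).
Proof.
  revert G. induction n; intros G.
  - simpl. unfold sumR; simpl. ring.
  - replace (2 * S n)%nat with (S (S (2 * n))) by lia.
    rewrite sum_strings_SS.
    rewrite (sumR_ext (strings (2 * n)) _ (fun u => (fun a b => 
       (G (a ++ [false]) (b ++ [false]) + G (a ++ [false]) (b ++ [true])) +
       (G (a ++ [true]) (b ++ [false]) + G (a ++ [true]) (b ++ [true]))) (evens u) (odds u))).
    2:{ intros s Hs. apply strings_len in Hs. assert (He : Nat.even (length s) = true) by (rewrite Hs; apply even_2n).
        rewrite !(evens_app s [_; _]), !(odds_app s [_; _]) by auto. simpl. auto. }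
    rewrite (IHn (fun a b => (G (a ++ [false]) (b ++ [false]) + G (a ++ [false]) (b ++ [true])) + (G (a ++ [true]) (b ++ [false]) + G (a ++ [true]) (b ++ [true])))).  rewrite sum_strings_S. apply sumR_ext. intros a _.
    rewrite !sum_strings_S. rewrite <- sumR_plus. apply sumR_ext. intros. ring.
Qed.

Lemma int_le_split (m : list bool -> R) t r c0 c1 : is_measure m ->
  int_le m t (r ++ [false]) c0 -> int_le m t (r ++ [true]) c1 -> int_le m t r (c0 + c1).
Proof.
  intros Hm H0 H1 n f Hf. destruct n as [|k].
  - simpl. unfold sumR; simpl. destruct Hm as [_ [_ Had]]. rewrite app_nil_r, Had.
    specialize (H0 0%nat f). specialize (H1 0%nat f). simpl in H0, H1. unfold sumR in H0, H1; simpl in H0, H1.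
    rewrite !app_nil_r in H0, H1. rewrite Rmult_plus_distr_l. rewrite Rplus_0_r in *.
    apply Rplus_le_compat; [apply H0|apply H1]; intros u [<-|[]]; destruct (Hf [] (or_introl eq_refl)) as [Ha Hb];
    split; auto; intros X HX; apply Hb; rewrite app_nil_r in *; eapply in_cyl_app; eauto.
  - rewrite sum_strings_cons. apply Rplus_le_compat.
    + rewrite (sumR_ext _ _ (fun u => f (false :: u) * m ((r ++ [false]) ++ u))).
      2:{ intros. rewrite <- app_assoc. auto. }
      apply H0. intros u Hu. destruct (Hf (false :: u)) as [A B].
      { apply strings_in'. simpl. rewrite (strings_len _ _ Hu). auto. }
      split; auto. intros X HX. apply B. rewrite <- app_assoc in HX. exact HX.
    + rewrite (sumR_ext _ _ (fun u => f (true :: u) * m ((r ++ [true]) ++ u))).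
      2:{ intros. rewrite <- app_assoc. auto. }
      apply H1. intros u Hu. destruct (Hf (true :: u)) as [A B].
      { apply strings_in'. simpl. rewrite (strings_len _ _ Hu). auto. }
      split; auto. intros X HX. apply B. rewrite <- app_assoc in HX. exact HX.
Qed.

End P5.
Import P5.
Module P6.
Open Scope R_scope.

Lemma length_removelast {A} (a : list A) : length (removelast a) = pred (length a).
Proof.
  destruct a as [|x a]; auto.
  rewrite (app_removelast_last x (l := x :: a)) at 2 by discriminate.
  rewrite length_app. simpl. lia.
Qed.

Lemma cyl_removelast s x a X : a <> [] -> in_cyl ((s ++ [x]) ++ a) X -> in_cyl (s ++ x :: removelast a) X.
Proof.
  intros Ha H. rewrite (app_removelast_last false Ha) in H.
  apply (in_cyl_app _ [last a false]). replace ((s ++ x :: removelast a) ++ [last a false]) with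
    ((s ++ [x]) ++ removelast a ++ [last a false]); auto. rewrite <- !app_assoc. reflexivity.
Qed.

Lemma split_aux1 (mu : list bool -> list bool -> R) g s s' k x : is_measure2 mu ->
  sumR (strings k) (fun a => sumR (strings (S k)) (fun b => g (x :: a) b * mu (s ++ x :: a) (s' ++ b))) =
  sumR (strings (S k)) (fun a => sumR (strings (S k)) (fun b => g (x :: removelast a) b * mu ((s ++ [x]) ++ a) (s' ++ b))).
Proof.
  intros [_ [_ [Had _]]]. rewrite (sum_strings_S k). apply sumR_ext. intros a _.
  rewrite !removelast_last. rewrite <- sumR_plus. apply sumR_ext. intros b _.
  rewrite (Had (s ++ x :: a)). rewrite <- !app_assoc. simpl. ring.
Qed.

Lemma int_le2_split1 mu t s s' c0 c1 : is_measure2 mu ->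
  int_le2 mu t (s ++ [false]) s' c0 -> int_le2 mu t (s ++ [true]) s' c1 -> int_le2 mu t s s' (c0 + c1).
Proof.
  intros Hm H0 H1 n g Hg. destruct n as [|k].
  - cbn [strings]. unfold sumR; cbn [fold_right]. rewrite !app_nil_r.
    destruct Hm as [_ [_ [Had _]]]. rewrite Had. 
    specialize (H0 0%nat g). specialize (H1 0%nat g). cbn [strings] in H0, H1. unfold sumR in H0, H1; cbn [fold_right] in H0, H1.
    rewrite !app_nil_r in H0, H1. rewrite !Rplus_0_r in *. rewrite Rmult_plus_distr_l.
    destruct (Hg [] [] (or_introl eq_refl) (or_introl eq_refl)) as [Ha Hb].
    apply Rplus_le_compat; [apply H0|apply H1]; intros u u' [<-|[]] [<-|[]];
    split; auto; intros X Y HX HY; apply Hb; rewrite app_nil_r in *; auto; eapply in_cyl_app; eauto.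
  - rewrite sum_strings_cons. rewrite !(split_aux1 mu g s s' k) by auto.
    apply Rplus_le_compat; [apply H0|apply H1]; intros a b Ha Hb;
    (assert (Hne : a <> []) by (intros ->; apply strings_len in Ha; discriminate));
    match goal with |- context [g (?x :: removelast a) b] =>
    (destruct (Hg (x :: removelast a) b) as [G1 G2];
     [apply strings_in'; simpl; rewrite length_removelast, (strings_len _ _ Ha); auto | auto |]);
    split; auto; intros X Y HX HY; apply G2; auto; apply cyl_removelast; auto end.
Qed.

Lemma int_le2_swap mu t s s' c :
  int_le2 (fun a b => mu b a) (fun X Y => t Y X) s' s c -> int_le2 mu t s s' c.
Proof.
  intros H n g Hg. specialize (H n (fun a b => g b a)).
  rewrite sumR_swap. apply H. intros u u' Hu Hu'. destruct (Hg u' u Hu' Hu) as [A B]. split; auto.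
Qed.

Lemma is_measure2_swap mu : is_measure2 mu -> is_measure2 (fun a b => mu b a).
Proof. intros [A [B [C D]]]. repeat split; auto. Qed.

Lemma int_le2_split2 mu t s s' c0 c1 : is_measure2 mu ->
  int_le2 mu t s (s' ++ [false]) c0 -> int_le2 mu t s (s' ++ [true]) c1 -> int_le2 mu t s s' (c0 + c1).
Proof.
  intros Hm H0 H1. apply int_le2_swap. apply int_le2_split1. apply is_measure2_swap; auto.
  - apply int_le2_swap. exact H0.
  - apply int_le2_swap. exact H1.
Qed.

Lemma pushjoin_app mu w u : Nat.even (length w) = true ->
  pushjoin mu (w ++ u) = mu (evens w ++ evens u) (odds w ++ odds u).
Proof. intros H. unfold pushjoin. rewrite evens_app, odds_app by auto. reflexivity. Qed.

Lemma len_interleave_even s s' : length s = length s' -> Nat.even (length (interleave s s')) = true.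
Proof. intros H. rewrite length_interleave by auto. apply even_2n. Qed.

Lemma int_le2_from_join mu t s s' c : length s = length s' ->
  int_le (pushjoin mu) t (interleave s s') c -> int_le2 mu (fun X Y => t (join X Y)) s s' c.
Proof.
  intros HL H n g Hg.
  destruct (evens_interleave s s' HL) as [E1 E2].
  specialize (H (2 * n)%nat (fun u => g (evens u) (odds u))).
  rewrite (sumR_ext _ _ (fun u => (fun a b => g a b * mu (s ++ a) (s' ++ b)) (evens u) (odds u))) in H.
  2:{ intros u _. rewrite pushjoin_app by (apply len_interleave_even; auto). rewrite E1, E2. reflexivity. }
  rewrite (sum_strings_evens n (fun a b => g a b * mu (s ++ a) (s' ++ b))) in H. apply H.
  intros u Hu. apply strings_len in Hu. destruct (len_evens_2n u n Hu) as [L1 L2].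
  destruct (Hg (evens u) (odds u)) as [A B]; try (apply strings_in'; auto).
  split; auto. intros Z HZ. rewrite <- (join_ev_od Z). apply B.
  - destruct (in_cyl_evens _ _ HZ) as [C1 _]. rewrite evens_app in C1 by (apply len_interleave_even; auto).
    rewrite E1 in C1. exact C1.
  - destruct (in_cyl_evens _ _ HZ) as [_ C2]. rewrite odds_app in C2 by (apply len_interleave_even; auto).
    rewrite E2 in C2. exact C2.
Qed.

Lemma refine_sum (m : list bool -> R) r n f : is_measure m ->
  sumR (strings n) (fun u => f u * m (r ++ u)) =
  sumR (strings (S n)) (fun u => f (removelast u) * m (r ++ u)).
Proof.
  intros [_ [_ Had]]. rewrite sum_strings_S. apply sumR_ext. intros u _.
  rewrite !removelast_last. rewrite (Had (r ++ u)). rewrite <- !app_assoc. ring.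
Qed.

Lemma int_le_from_prod mu t2 r c : is_measure2 mu -> Nat.even (length r) = true ->
  int_le2 mu t2 (evens r) (odds r) c -> int_le (pushjoin mu) (fun Z => t2 (ev Z) (od Z)) r c.
Proof.
  intros Hm Hr H.
  assert (Hm1 : is_measure (pushjoin mu)).
  { destruct Hm as [A [B [C D]]]. unfold pushjoin. repeat split; auto.
    intros s. destruct (evens_odds_app s [false]) as [F1 F2]. destruct (evens_odds_app s [true]) as [T1 T2].
    rewrite F1, F2, T1, T2. simpl. destruct (Nat.even (length s)); rewrite !app_nil_r; auto. }
  assert (Heven : forall k f, (forall u, In u (strings (2 * k)) -> 0 <= f u /\
        (forall X, in_cyl (r ++ u) X -> ele (EFin (f u)) (t2 (ev X) (od X)))) ->
        sumR (strings (2 * k)) (fun u => f u * pushjoin mu (r ++ u)) <= c).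
  { intros k f Hf.
    rewrite (sumR_ext _ _ (fun u => (fun a b => f (interleave a b) * mu (evens r ++ a) (odds r ++ b)) (evens u) (odds u))).
    2:{ intros u Hu. apply strings_len in Hu. rewrite interleave_evens_odds by (rewrite Hu; apply even_2n).
        rewrite pushjoin_app by auto. reflexivity. }
    rewrite (sum_strings_evens k (fun a b => f (interleave a b) * mu (evens r ++ a) (odds r ++ b))). apply H. intros a b Ha Hb.
    apply strings_len in Ha. apply strings_len in Hb.
    destruct (Hf (interleave a b)) as [A B].
    { apply strings_in'. rewrite length_interleave; lia. }
    split; auto. intros X Y HX HY.
    specialize (B (join X Y)). rewrite ev_join, od_join in B. apply B.
    pose proof (interleave_evens_odds r Hr) as Er.
    destruct (evens_odds_len r) as [L1 L2].
    assert (HL : length (evens r) = length (odds r)).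
    { rewrite L1, L2. pose proof (Nat.div2_odd (length r)) as E. rewrite <- Nat.negb_even, Hr in E.
      cbn [negb Nat.b2n] in E. rewrite Nat.add_0_r in E. rewrite E at 1. rewrite Nat.div2_succ_double. auto. }
    rewrite <- Er at 1. rewrite <- interleave_app by auto.
    apply in_cyl_interleave; auto. rewrite !length_app. lia. }
  intros n f Hf.
  destruct (Nat.Even_or_Odd n) as [[k ->]|[k ->]].
  - apply Heven; auto.
  - rewrite refine_sum by auto. replace (S (2 * k + 1)) with (2 * S k)%nat by lia.
    apply Heven. intros u Hu.
    assert (Hne : u <> []) by (intros ->; apply strings_len in Hu; simpl in Hu; lia).
    destruct (Hf (removelast u)) as [A B].
    { apply strings_in'. rewrite length_removelast, (strings_len _ _ Hu). lia. }
    split; auto. intros X HX. apply B.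
    rewrite (app_removelast_last false Hne), app_assoc in HX. eapply in_cyl_app; eauto.
Qed.

End P6.
Import P6.
Module P7.
Open Scope R_scope.

Lemma pushjoin_measure mu : is_measure2 mu -> is_measure (pushjoin mu).
Proof.
  intros [A [B [C D]]]. unfold pushjoin. repeat split; auto.
  intros s. destruct (evens_odds_app s [false]) as [F1 F2]. destruct (evens_odds_app s [true]) as [T1 T2].
  rewrite F1, F2, T1, T2. simpl. destruct (Nat.even (length s)); rewrite !app_nil_r; auto.
Qed.

Definition pushsplit (nu : list bool -> R) (s s' : list bool) : R :=
  if (length s <=? length s')%nat
  then sumR (strings (length s' - length s)) (fun a => nu (interleave (s ++ a) s'))
  else sumR (strings (length s - length s')) (fun b => nu (interleave s (s' ++ b))).

Lemma ps_le nu s s' : (length s <= length s')%nat ->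
  pushsplit nu s s' = sumR (strings (length s' - length s)) (fun a => nu (interleave (s ++ a) s')).
Proof. intros H. unfold pushsplit. destruct (Nat.leb_spec (length s) (length s')); auto; lia. Qed.

Lemma ps_ge nu s s' : (length s' <= length s)%nat ->
  pushsplit nu s s' = sumR (strings (length s - length s')) (fun b => nu (interleave s (s' ++ b))).
Proof.
  intros H. unfold pushsplit. destruct (Nat.leb_spec (length s) (length s')); auto.
  assert (length s = length s') by lia. rewrite H1, Nat.sub_diag. simpl. unfold sumR; simpl.
  rewrite !app_nil_r. auto.
Qed.

Lemma meas_2 (nu : list bool -> R) w : is_measure nu ->
  nu w = (nu (w ++ [false; false]) + nu (w ++ [false; true])) + (nu (w ++ [true; false]) + nu (w ++ [true; true])).
Proof.
  intros Hm. destruct Hm as [_ [_ Had]]. rewrite Had, (Had (w ++ [false])), (Had (w ++ [true])).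
  rewrite <- !app_assoc. simpl. ring.
Qed.

Lemma ps_add1 nu s s' : is_measure nu ->
  pushsplit nu s s' = pushsplit nu (s ++ [false]) s' + pushsplit nu (s ++ [true]) s'.
Proof.
  intros Hm. destruct (Nat.lt_ge_cases (length s) (length s')).
  - rewrite !ps_le by (rewrite ?length_app; simpl; lia). rewrite !length_app. simpl.
    replace (length s' - length s)%nat with (S (length s' - (length s + 1))) by lia.
    rewrite sum_strings_cons. f_equal; apply sumR_ext; intros; rewrite <- app_assoc; auto.
  - rewrite !ps_ge by (rewrite ?length_app; simpl; lia). rewrite !length_app. simpl.
    replace (length s + 1 - length s')%nat with (S (length s - length s')) by lia.
    rewrite !sum_strings_S, <- sumR_plus. apply sumR_ext. intros b Hb. apply strings_len in Hb.
    rewrite !app_assoc, !interleave_snoc by (rewrite length_app; lia).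
    rewrite (meas_2 nu (interleave s (s' ++ b))) by auto. simpl. ring.
Qed.

Lemma ps_add2 nu s s' : is_measure nu ->
  pushsplit nu s s' = pushsplit nu s (s' ++ [false]) + pushsplit nu s (s' ++ [true]).
Proof.
  intros Hm. destruct (Nat.lt_ge_cases (length s') (length s)).
  - rewrite !ps_ge by (rewrite ?length_app; simpl; lia). rewrite !length_app. simpl.
    replace (length s - length s')%nat with (S (length s - (length s' + 1))) by lia.
    rewrite sum_strings_cons. f_equal; apply sumR_ext; intros; rewrite <- app_assoc; auto.
  - rewrite !ps_le by (rewrite ?length_app; simpl; lia). rewrite !length_app. simpl.
    replace (length s' + 1 - length s)%nat with (S (length s' - length s)) by lia.
    rewrite !sum_strings_S, <- sumR_plus. apply sumR_ext. intros b Hb. apply strings_len in Hb.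
    rewrite !app_assoc, !interleave_snoc by (rewrite length_app; lia).
    rewrite (meas_2 nu (interleave (s ++ b) s')) by auto. simpl. ring.
Qed.

Lemma pushsplit_measure nu : is_measure nu -> is_measure2 (pushsplit nu).
Proof.
  intros Hm. repeat split.
  - unfold pushsplit. simpl. unfold sumR; simpl. destruct Hm as [A _]. rewrite A. ring.
  - intros s t. unfold pushsplit. destruct (_ <=? _)%nat; apply sumR_nonneg; intros; apply meas_nonneg; auto.
  - intros; apply ps_add1; auto.
  - intros; apply ps_add2; auto.
Qed.

Lemma int_le2_pushsplit mu nu t : is_measure2 mu -> is_measure nu ->
  (forall r, int_le (pushjoin mu) t r (nu r)) ->
  forall s s', int_le2 mu (fun X Y => t (join X Y)) s s' (pushsplit nu s s').
Proof.
  intros Hmu Hnu H.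
  assert (K : forall d s s', (length s' - length s + (length s - length s'))%nat = d ->
     int_le2 mu (fun X Y => t (join X Y)) s s' (pushsplit nu s s')).
  { intros d. induction d as [d IH] using lt_wf_ind. intros s s' Hd.
    destruct (Nat.lt_total (length s) (length s')) as [Hlt|[Heq|Hgt]].
    - rewrite ps_add1 by auto. apply int_le2_split1; auto; eapply IH; [|reflexivity|..|reflexivity];
      rewrite length_app; simpl; lia.
    - rewrite ps_le by lia. rewrite Heq, Nat.sub_diag. simpl. unfold sumR; simpl.
      rewrite app_nil_r, Rplus_0_r. apply int_le2_from_join; auto.
    - rewrite ps_add2 by auto. apply int_le2_split2; auto; eapply IH; [|reflexivity|..|reflexivity];
      rewrite length_app; simpl; lia. }
  intros s s'. eapply K; reflexivity.
Qed.

Lemma int_le_pushjoin mu nu2 t2 : is_measure2 mu -> is_measure2 nu2 ->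
  (forall s s', int_le2 mu t2 s s' (nu2 s s')) ->
  forall r, int_le (pushjoin mu) (fun Z => t2 (ev Z) (od Z)) r (pushjoin nu2 r).
Proof.
  intros Hmu Hnu H r.
  destruct (Nat.even (length r)) eqn:Er.
  - apply int_le_from_prod; auto.
  - destruct (pushjoin_measure nu2 Hnu) as [_ [_ Had]]. rewrite Had.
    apply int_le_split. apply pushjoin_measure; auto.
    all: apply int_le_from_prod; auto; rewrite length_app; simpl;
      rewrite Nat.add_1_r, Nat.even_succ, <- Nat.negb_even, Er; auto.
Qed.

End P7.
Import P7.
Module P8.

Definition ext (h o c : nat) : nat := bsum h (fun i => pw2 i * (1 + bitc (2 * i + o) c))%nat.

Lemma C_ext3 f g k : CC f -> CC g -> CC k -> CC (fun z => ext (f z) (g z) (k z)).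
Proof. intros. unfold ext. csolve. Qed.

Lemma ext_code l h o : (forall i, (i < h)%nat -> (2 * i + o < length l)%nat) ->
  ext h o (code_str l) = bsum h (fun i => 2 ^ i * (1 + Nat.b2n (nth (2 * i + o) l false)))%nat.
Proof.
  intros H. unfold ext. apply bsum_ext. intros i Hi. rewrite pw2_pow, bitc_code; auto.
Qed.

Definition EVf (c : nat) : nat := ext (Nat.div2 (S (lenc c))) 0 c.
Definition ODf (c : nat) : nat := ext (Nat.div2 (lenc c)) 1 c.
Definition EVt (c : nat) : nat := ext (Nat.div2 (lenc c)) 0 c.
Definition ODt (c : nat) : nat := ext (Nat.div2 (lenc c)) 1 c.

Lemma div2_bound i n : (i < Nat.div2 n)%nat -> (2 * i + 1 < n)%nat.
Proof. intros H. pose proof (Nat.div2_odd n). destruct (Nat.odd n); simpl in *; lia. Qed.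
Lemma div2S_bound i n : (i < Nat.div2 (S n))%nat -> (2 * i < n)%nat.
Proof. intros H. pose proof (Nat.div2_odd (S n)). destruct (Nat.odd (S n)) eqn:E; simpl in *.
  lia. rewrite Nat.odd_succ in E. assert (2 * i <> n)%nat. { intros <-. rewrite Nat.even_mul in E. discriminate. } lia. Qed.

Lemma EVf_code r : EVf (code_str r) = code_str (evens r).
Proof.
  unfold EVf. rewrite lenc_code. rewrite ext_code.
  - rewrite (code_sum (evens r)). destruct (evens_odds_len r) as [L _]. rewrite L.
    apply bsum_ext. intros i _. destruct (nth_evens_odds r) as [N _]. rewrite N, Nat.add_0_r. auto.
  - intros i Hi. apply div2S_bound in Hi. lia.
Qed.

Lemma ODf_code r : ODf (code_str r) = code_str (odds r).
Proof.
  unfold ODf. rewrite lenc_code. rewrite ext_code.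
  - rewrite (code_sum (odds r)). destruct (evens_odds_len r) as [_ L]. rewrite L.
    apply bsum_ext. intros i _. destruct (nth_evens_odds r) as [_ N]. rewrite N.
    replace (2 * i + 1)%nat with (S (2 * i)) by lia. auto.
  - intros i Hi. apply div2_bound in Hi. lia.
Qed.

Lemma EVt_prefix Z m : EVt (code_str (prefix Z m)) = code_str (prefix (ev Z) (Nat.div2 m)).
Proof.
  unfold EVt. rewrite lenc_code, length_prefix, ext_code.
  - rewrite code_prefix. apply bsum_ext. intros i Hi. rewrite nth_prefix, Nat.add_0_r. auto.
    apply div2_bound in Hi. lia.
  - intros i Hi. rewrite length_prefix. apply div2_bound in Hi. lia.
Qed.

Lemma ODt_prefix Z m : ODt (code_str (prefix Z m)) = code_str (prefix (od Z) (Nat.div2 m)).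
Proof.
  unfold ODt. rewrite lenc_code, length_prefix, ext_code.
  - rewrite code_prefix. apply bsum_ext. intros i Hi. rewrite nth_prefix.
    replace (2 * i + 1)%nat with (S (2 * i)) by lia. auto. apply div2_bound in Hi. lia.
  - intros i Hi. rewrite length_prefix. apply div2_bound in Hi. lia.
Qed.

Lemma sup_transfer (a b : nat -> R) e :
  is_sup_seq a e -> (forall n, exists m, b n = a m) -> (forall m, exists n, (a m <= b n)%R) -> is_sup_seq b e.
Proof.
  intros H H1 H2. destruct e as [r|]; simpl in *.
  - destruct H as [Hub Hl]. split.
    + intros x [n ->]. destruct (H1 n) as [m ->]. apply Hub. eauto.
    + intros M HM. apply Hl. intros x [m ->]. destruct (H2 m) as [n Hn].
      eapply Rle_trans; eauto.
  - intros M. destruct (H M) as [m Hm]. destruct (H2 m) as [n Hn]. exists n. lra.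
Qed.

Lemma CC_of p : computable_fun p -> CC p.
Proof. intros Hp. eapply C_ext. apply (C_cf p (fun z => z)); auto. apply C_id. intros; auto. Qed.

Lemma comp_of_C p G : computable_fun p -> CC G -> computable_fun (fun z => p (G z)).
Proof. intros Hp HG. apply C_computable. apply C_cf; auto. Qed.

Lemma C_EVf f : CC f -> CC (fun z => EVf (f z)).
Proof. intros. unfold EVf, ext. csolve. Qed.
Lemma C_ODf f : CC f -> CC (fun z => ODf (f z)).
Proof. intros. unfold ODf, ext. csolve. Qed.
Lemma C_EVt f : CC f -> CC (fun z => EVt (f z)).
Proof. intros. unfold EVt, ext. csolve. Qed.
Lemma C_ODt f : CC f -> CC (fun z => ODt (f z)).
Proof. intros. unfold ODt, ext. csolve. Qed.

Definition G1 (c : nat) : nat := npair (EVt c) (ODt c).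
Definition G2 (z : nat) : nat := npair (EVf (fstc z)) (npair (ODf (fstc z)) (sndc z)).

Lemma C_G1 : CC G1.
Proof. unfold G1, EVt, ODt, ext. csolve. Qed.
Lemma C_G2 : CC G2.
Proof. unfold G2, EVf, ODf, ext. csolve. Qed.

Theorem dir_back mu X Y : computable_measure2 mu ->
  comp_random (pushjoin mu) (join X Y) -> comp_random2 mu X Y.
Proof.
  intros [Hmu _] Hr t2 nu2 Hlsc Hnu Hint.
  enough (Hf : (fun Z => t2 (ev Z) (od Z)) (join X Y) <> EInf) by (simpl in Hf; rewrite ev_join, od_join in Hf; exact Hf).
  apply (Hr (fun Z => t2 (ev Z) (od Z)) (pushjoin nu2)).
  - destruct Hlsc as [H0 [p [m [d [Hp [Hm [Hd Hs]]]]]]]. split.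
    + intros Z. apply H0.
    + exists (fun z => p (G1 z)), (fun z => m (G1 z)), (fun z => d (G1 z)).
      split; [apply comp_of_C; auto; apply C_G1|].
      split; [apply comp_of_C; auto; apply C_G1|].
      split; [apply comp_of_C; auto; apply C_G1|].
      intros Z. eapply sup_transfer. apply (Hs (ev Z) (od Z)).
      * intros n. exists (Nat.div2 n). unfold Qof, G1. rewrite EVt_prefix, ODt_prefix. reflexivity.
      * intros n. exists (2 * n)%nat. unfold Qof, G1. rewrite EVt_prefix, ODt_prefix, Nat.div2_double. apply Rle_refl.
  - destruct Hnu as [Hnm [p [m [d [Hp [Hm [Hd Hs]]]]]]]. split.
    + apply pushjoin_measure; auto.
    + exists (fun z => p (G2 z)), (fun z => m (G2 z)), (fun z => d (G2 z)).
      split; [apply comp_of_C; auto; apply C_G2|].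
      split; [apply comp_of_C; auto; apply C_G2|].
      split; [apply comp_of_C; auto; apply C_G2|].
      intros s k. unfold Qof, G2. rewrite fstc_npair, sndc_npair, EVf_code, ODf_code. apply Hs.
  - apply int_le_pushjoin; auto. destruct Hnu; auto.
Qed.

End P8.
Import P8.
Module P9.

Definition IL (a b M : nat) : nat :=
  bsum M (fun q => pw2 q * (1 + (if (Nat.b2n (Nat.odd q) =? 0)%nat then bitc (Nat.div2 q) a else bitc (Nat.div2 q) b)))%nat.

Definition c1f (z : nat) : nat := IL (fstc z) (sndc z) (2 * lenc (fstc z)).
Definition c2f (z : nat) : nat := IL (fstc z) (sndc z) (pred (2 * lenc (fstc z))).

Lemma C_c1f : CC c1f.
Proof. unfold c1f, IL. csolve. Qed.
Lemma C_c2f : CC c2f.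
Proof. unfold c2f, IL. csolve. Qed.

Definition self (p m d : nat -> nat) (z : nat) : nat :=
  if (p (c2f z) * S (d (c1f z)) + m (c1f z) * S (d (c2f z)) <=? p (c1f z) * S (d (c2f z)) + m (c2f z) * S (d (c1f z)))%nat
  then c1f z else c2f z.

Lemma C_self p m d : computable_fun p -> computable_fun m -> computable_fun d -> CC (self p m d).
Proof.
  intros Hp Hm Hd. pose proof C_c1f. pose proof C_c2f. unfold self. csolve.
Qed.

Lemma IL_prefix X Y n M : (M <= 2 * n)%nat ->
  IL (code_str (prefix X n)) (code_str (prefix Y n)) M = code_str (prefix (join X Y) M).
Proof.
  intros HM. unfold IL. rewrite (code_prefix (join X Y) M). apply bsum_ext. intros q Hq.
  rewrite pw2_pow. f_equal. f_equal. unfold join.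
  pose proof (Nat.div2_odd q) as Eq.
  assert (Hd : (Nat.div2 q < n)%nat) by lia.
  rewrite <- Nat.negb_odd. destruct (Nat.odd q); simpl.
  - rewrite bitc_code, nth_prefix; auto. rewrite length_prefix; auto.
  - rewrite bitc_code, nth_prefix; auto. rewrite length_prefix; auto.
Qed.

Open Scope R_scope.

Lemma Q_cmp (P1 M1 D1 P2 M2 D2 : nat) :
  (P2 * S D1 + M1 * S D2 <= P1 * S D2 + M2 * S D1)%nat ->
  (INR P2 - INR M2) / INR (S D2) <= (INR P1 - INR M1) / INR (S D1).
Proof.
  intros H. apply le_INR in H. rewrite !plus_INR, !mult_INR in H.
  assert (A1 : 0 < INR (S D1)) by (apply lt_0_INR; lia).
  assert (A2 : 0 < INR (S D2)) by (apply lt_0_INR; lia).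
  unfold Rdiv. apply Rmult_le_reg_r with (INR (S D1) * INR (S D2)). nra.
  replace ((INR P2 - INR M2) * / INR (S D2) * (INR (S D1) * INR (S D2))) with ((INR P2 - INR M2) * INR (S D1)) by (field; lra).
  replace ((INR P1 - INR M1) * / INR (S D1) * (INR (S D1) * INR (S D2))) with ((INR P1 - INR M1) * INR (S D2)) by (field; lra).
  nra.
Qed.

Lemma Q_cmp' (P1 M1 D1 P2 M2 D2 : nat) :
  ~ (P2 * S D1 + M1 * S D2 <= P1 * S D2 + M2 * S D1)%nat ->
  (INR P1 - INR M1) / INR (S D1) <= (INR P2 - INR M2) / INR (S D2).
Proof. intros H. apply Q_cmp. lia. Qed.

Lemma self_spec p m d z :
  (Qof p m d (self p m d z) = Qof p m d (c1f z) \/ Qof p m d (self p m d z) = Qof p m d (c2f z)) /\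
  Qof p m d (c1f z) <= Qof p m d (self p m d z) /\ Qof p m d (c2f z) <= Qof p m d (self p m d z).
Proof.
  unfold self. destruct (Nat.leb_spec (p (c2f z) * S (d (c1f z)) + m (c1f z) * S (d (c2f z)))
       (p (c1f z) * S (d (c2f z)) + m (c2f z) * S (d (c1f z)))).
  - split; auto. split. apply Rle_refl. unfold Qof. apply Q_cmp; auto.
  - split; auto. split. unfold Qof. apply Q_cmp'; lia. apply Rle_refl.
Qed.

Lemma lsc2_join t : lsc t -> lsc2 (fun X Y => t (join X Y)).
Proof.
  intros [H0 [p [m [d [Hp [Hm [Hd Hs]]]]]]]. split.
  - intros; apply H0.
  - exists (fun z => p (self p m d z)), (fun z => m (self p m d z)), (fun z => d (self p m d z)).
    assert (HS := C_self p m d Hp Hm Hd).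
    split; [apply comp_of_C; auto|]. split; [apply comp_of_C; auto|]. split; [apply comp_of_C; auto|].
    intros X Y. eapply sup_transfer. apply (Hs (join X Y)).
    + intros n. change (Qof (fun z => p (self p m d z)) (fun z => m (self p m d z)) (fun z => d (self p m d z))
         (npair (code_str (prefix X n)) (code_str (prefix Y n))))
        with (Qof p m d (self p m d (npair (code_str (prefix X n)) (code_str (prefix Y n))))).
      destruct (self_spec p m d (npair (code_str (prefix X n)) (code_str (prefix Y n)))) as [[E|E] _]; rewrite E;
      unfold c1f, c2f; rewrite fstc_npair, sndc_npair, lenc_code, length_prefix, IL_prefix by lia; eauto.
    + intros k. exists (Nat.div2 (S k)).
      change (Qof (fun z => p (self p m d z)) (fun z => m (self p m d z)) (fun z => d (self p m d z))
         (npair (code_str (prefix X (Nat.div2 (S k)))) (code_str (prefix Y (Nat.div2 (S k))))))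
        with (Qof p m d (self p m d (npair (code_str (prefix X (Nat.div2 (S k)))) (code_str (prefix Y (Nat.div2 (S k))))))).
      destruct (self_spec p m d (npair (code_str (prefix X (Nat.div2 (S k)))) (code_str (prefix Y (Nat.div2 (S k)))))) as [_ [E1 E2]].
      unfold c1f, c2f in E1, E2. rewrite !fstc_npair, !sndc_npair, !lenc_code, !length_prefix in E1, E2.
      rewrite IL_prefix in E1 by lia. rewrite IL_prefix in E2 by apply Nat.le_pred_l.
      pose proof (Nat.div2_odd (S k)) as Ek. destruct (Nat.odd (S k)); cbn [Nat.b2n] in Ek.
      * replace k with (2 * Nat.div2 (S k))%nat at 1 by lia. exact E1.
      * rewrite <- Nat.sub_1_r in E2. replace k with (2 * Nat.div2 (S k) - 1)%nat at 1 by lia. exact E2.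
Qed.

End P9.
Import P9.
Module P10a.

Fixpoint strs (n t : nat) : list bool :=
  match n with O => [] | S n' => strs n' (Nat.div2 t) ++ [Nat.odd t] end.

Lemma length_strs n t : length (strs n t) = n.
Proof. revert t; induction n; intros t; simpl; auto. rewrite length_app, IHn. simpl. lia. Qed.

Lemma strings_strs_aux n a m :
  flat_map (fun s => [s ++ [false]; s ++ [true]]) (map (strs n) (seq a m)) = map (strs (S n)) (seq (2 * a) (2 * m)).
Proof.
  revert a. induction m; intros a; [reflexivity|].
  replace (2 * S m)%nat with (S (S (2 * m))) by lia.
  cbn [seq map flat_map]. rewrite IHm. replace (2 * S a)%nat with (S (S (2 * a))) by lia.
  cbn [strs]. rewrite Nat.div2_double, Nat.div2_succ_double, Nat.odd_mul.
  replace (Nat.odd (S (2 * a))) with true. reflexivity.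
  rewrite Nat.odd_succ, Nat.even_mul. reflexivity.
Qed.

Lemma strings_strs n : strings n = map (strs n) (seq 0 (2 ^ n)).
Proof.
  induction n; simpl; auto. rewrite IHn, strings_strs_aux. simpl. repeat f_equal; lia.
Qed.

Lemma nth_strs n t p : (p < n)%nat -> nth p (strs n t) false = Nat.odd (Nat.iter (n - 1 - p) Nat.div2 t).
Proof.
  revert t p. induction n; intros t p Hp. lia. simpl.
  destruct (Nat.lt_ge_cases p n).
  - rewrite app_nth1 by (rewrite length_strs; auto). rewrite IHn by auto.
    replace (n - 0 - p)%nat with (S (n - 1 - p)) by lia. rewrite Nat.iter_succ_r. auto.
  - assert (p = n) by lia. subst. rewrite app_nth2 by (rewrite length_strs; auto).
    rewrite length_strs, Nat.sub_diag. replace (n - 0 - n)%nat with 0%nat by lia. reflexivity.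
Qed.

Lemma tb_strs n t p : (p < n)%nat -> tb t (n - 1 - p) = Nat.b2n (nth p (strs n t) false).
Proof. intros. rewrite nth_strs; auto. Qed.

Lemma nth_interleave A B q : length A = length B ->
  nth q (interleave A B) false = if Nat.even q then nth (Nat.div2 q) A false else nth (Nat.div2 q) B false.
Proof.
  intros HL. destruct (evens_interleave A B HL) as [E1 E2]. destruct (nth_evens_odds (interleave A B)) as [N1 N2].
  destruct (Nat.Even_or_Odd q) as [[u ->]|[u ->]].
  - rewrite even_2n, Nat.div2_double, <- N1, E1. auto.
  - replace (2 * u + 1)%nat with (S (2 * u)) by lia. rewrite even_2n1, Nat.div2_succ_double, <- N2, E2. auto.
Qed.

Open Scope R_scope.

Fixpoint rsum (n : nat) (f : nat -> R) : R := match n with O => 0 | S k => rsum k f + f k end.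

Lemma rsum_ext n f g : (forall i, (i < n)%nat -> f i = g i) -> rsum n f = rsum n g.
Proof. induction n; simpl; intros; auto. rewrite IHn, H; auto. Qed.
Lemma rsum_minus n f g : rsum n (fun i => f i - g i) = rsum n f - rsum n g.
Proof. induction n; simpl; [ring|]. rewrite IHn. ring. Qed.
Lemma rsum_div n f c : rsum n f / c = rsum n (fun i => f i / c).
Proof. induction n; simpl. unfold Rdiv; ring. rewrite <- IHn. unfold Rdiv; ring. Qed.
Lemma rsum_abs n f : Rabs (rsum n f) <= rsum n (fun i => Rabs (f i)).
Proof. induction n; simpl. rewrite Rabs_R0; lra. eapply Rle_trans. apply Rabs_triang. lra. Qed.
Lemma rsum_le n f g : (forall i, (i < n)%nat -> f i <= g i) -> rsum n f <= rsum n g.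
Proof. induction n; simpl; intros; [lra|]. apply Rplus_le_compat; auto. Qed.
Lemma rsum_const n c : rsum n (fun _ => c) = INR n * c.
Proof. induction n; simpl; [ring|]. rewrite IHn. destruct n; simpl; ring. Qed.
Lemma INR_bsum n f : INR (bsum n f) = rsum n (fun i => INR (f i)).
Proof. induction n; simpl; auto. rewrite plus_INR, IHn. auto. Qed.

Lemma sumR_seq f n : sumR (seq 0 n) f = rsum n f.
Proof. induction n; [reflexivity|]. rewrite seq_S, sumR_app, IHn. cbn [rsum]. unfold sumR; simpl. ring. Qed.

Lemma sum_strings_rsum n F : sumR (strings n) F = rsum (2 ^ n) (fun t => F (strs n t)).
Proof. rewrite strings_strs, sumR_map, sumR_seq. auto. Qed.

Lemma bprod_except N e t : (t < N)%nat ->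
  (bprod N (fun t' => if (t' =? t)%nat then 1%nat else e t') * e t)%nat = bprod N e.
Proof.
  induction N; intros Ht. lia. simpl.
  destruct (Nat.eqb_spec N t).
  - subst. rewrite (bprod_ext _ _ e). lia. intros i Hi. destruct (Nat.eqb_spec i t); auto; lia.
  - rewrite <- IHN by lia. lia.
Qed.

Lemma bprod_pos N e : (forall t, (0 < e t)%nat) -> (0 < bprod N e)%nat.
Proof. intros H. induction N; simpl; auto. specialize (H N). nia. Qed.

Definition Psum (N : nat) (pp ee : nat -> nat) : nat :=
  bsum N (fun t => pp t * bprod N (fun t' => if (t' =? t)%nat then 1%nat else ee t'))%nat.

Lemma Psum_div N pp ee : (forall t, (0 < ee t)%nat) ->
  INR (Psum N pp ee) / INR (bprod N ee) = rsum N (fun t => INR (pp t) / INR (ee t)).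
Proof.
  intros H. unfold Psum. rewrite INR_bsum, rsum_div. apply rsum_ext. intros t Ht.
  rewrite <- (bprod_except N ee t Ht). rewrite !mult_INR.
  assert (0 < INR (ee t)) by (apply lt_0_INR; auto).
  assert (0 < INR (bprod N (fun t' => if (t' =? t)%nat then 1%nat else ee t'))).
  { apply lt_0_INR. apply bprod_pos. intros t'. destruct (t' =? t)%nat; auto. }
  field. lra.
Qed.

Lemma Qof_Psum (P M D : nat -> nat) N pp mm ee z :
  (forall t, (0 < ee t)%nat) ->
  P z = Psum N pp ee -> M z = Psum N mm ee -> D z = pred (bprod N ee) ->
  Qof P M D z = rsum N (fun t => (INR (pp t) - INR (mm t)) / INR (ee t)).
Proof.
  intros H HP HM HD. unfold Qof. rewrite HP, HM, HD.
  rewrite Nat.succ_pred_pos by (apply bprod_pos; auto).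
  unfold Rdiv at 1. rewrite Rmult_minus_distr_r. fold (Rdiv (INR (Psum N pp ee)) (INR (bprod N ee))).
  fold (Rdiv (INR (Psum N mm ee)) (INR (bprod N ee))). rewrite !Psum_div by auto.
  rewrite <- rsum_minus. apply rsum_ext. intros. unfold Rdiv. ring.
Qed.

End P10a.
Import P10a.
Module P10b.

Definition ls (z : nat) : nat := lenc (fstc z).
Definition ls2 (z : nat) : nat := lenc (fstc (sndc z)).
Definition jj (z : nat) : nat := (ls2 z - ls z + (ls z - ls2 z))%nat.
Definition LL (z : nat) : nat := (ls z + (ls2 z - ls z))%nat.
Definition BIT (z t q : nat) : nat :=
  if (Nat.b2n (Nat.odd q) =? 0)%nat
  then (if (Nat.div2 q <? ls z)%nat then bitc (Nat.div2 q) (fstc z) else tb t (jj z - 1 - (Nat.div2 q - ls z)))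
  else (if (Nat.div2 q <? ls2 z)%nat then bitc (Nat.div2 q) (fstc (sndc z)) else tb t (jj z - 1 - (Nat.div2 q - ls2 z))).
Definition TC (z t : nat) : nat := bsum (2 * LL z) (fun q => pw2 q * (1 + BIT z t q))%nat.
Definition QI (z t : nat) : nat := npair (TC z t) (sndc (sndc z) + jj z).
Definition AP (p d : nat -> nat) (z : nat) : nat :=
  Psum (pw2 (jj z)) (fun t => p (QI z t)) (fun t => S (d (QI z t))).
Definition AD (d : nat -> nat) (z : nat) : nat :=
  pred (bprod (pw2 (jj z)) (fun t => S (d (QI z t)))).

Lemma C_AP p d : computable_fun p -> computable_fun d -> CC (AP p d).
Proof. intros. unfold AP, Psum, QI, TC, BIT, jj, LL, ls, ls2. csolve. Qed.
Lemma C_AD d : computable_fun d -> CC (AD d).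
Proof. intros. unfold AD, QI, TC, BIT, jj, LL, ls, ls2. csolve. Qed.

Definition rt (s s' : list bool) (t : nat) : list bool :=
  if (length s <=? length s')%nat then interleave (s ++ strs (length s' - length s) t) s'
  else interleave s (s' ++ strs (length s - length s') t).

Lemma bit_app_strs s j t u : (u < length s + j)%nat ->
  (if (u <? length s)%nat then bitc u (code_str s) else tb t (j - 1 - (u - length s))) =
  Nat.b2n (nth u (s ++ strs j t) false).
Proof.
  intros H. destruct (Nat.ltb_spec u (length s)).
  - rewrite bitc_code, app_nth1; auto.
  - rewrite app_nth2 by auto. rewrite tb_strs; auto. lia.
Qed.

Lemma bit_short s u X : (u < length s)%nat ->
  (if (u <? length s)%nat then bitc u (code_str s) else X) = Nat.b2n (nth u s false).
Proof. intros H. destruct (Nat.ltb_spec u (length s)); [rewrite bitc_code; auto|lia]. Qed.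

Lemma TC_spec s s' k t :
  TC (npair (code_str s) (npair (code_str s') k)) t = code_str (rt s s' t).
Proof.
  unfold TC, BIT, jj, LL, ls, ls2, rt. rewrite !sndc_npair, !fstc_npair, !lenc_code.
  destruct (Nat.leb_spec (length s) (length s')) as [Hle|Hgt].
  - set (A := s ++ strs (length s' - length s) t).
    assert (HA : length A = length s') by (unfold A; rewrite length_app, length_strs; lia).
    rewrite (code_sum (interleave A s')), length_interleave by auto. rewrite HA.
    replace (length s + (length s' - length s))%nat with (length s') by lia.
    apply bsum_ext. intros q Hq. rewrite pw2_pow, nth_interleave by auto. f_equal. f_equal.
    rewrite <- Nat.negb_even. assert (Hu : (Nat.div2 q < length s')%nat).
    { pose proof (Nat.div2_odd q). destruct (Nat.odd q); simpl in *; lia. }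
    destruct (Nat.even q); simpl.
    + replace (length s' - length s + (length s - length s'))%nat with (length s' - length s)%nat by lia.
      apply bit_app_strs. lia.
    + apply bit_short; auto.
  - set (B := s' ++ strs (length s - length s') t).
    assert (HB : length s = length B) by (unfold B; rewrite length_app, length_strs; lia).
    rewrite (code_sum (interleave s B)), length_interleave by auto.
    replace (length s + (length s' - length s))%nat with (length s) by lia.
    apply bsum_ext. intros q Hq. rewrite pw2_pow, nth_interleave by auto. f_equal. f_equal.
    rewrite <- Nat.negb_even. assert (Hu : (Nat.div2 q < length s)%nat).
    { pose proof (Nat.div2_odd q). destruct (Nat.odd q); simpl in *; lia. }
    destruct (Nat.even q); simpl.
    + apply bit_short; auto.
    + replace (length s' - length s + (length s - length s'))%nat with (length s - length s')%nat by lia.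
      apply bit_app_strs. lia.
Qed.

Open Scope R_scope.

Lemma pushsplit_rsum nu s s' :
  pushsplit nu s s' = rsum (2 ^ (length s' - length s + (length s - length s')))
                           (fun t => nu (rt s s' t)).
Proof.
  unfold rt. destruct (Nat.leb_spec (length s) (length s')).
  - rewrite ps_le by auto. rewrite sum_strings_rsum.
    replace (length s' - length s + (length s - length s'))%nat with (length s' - length s)%nat by lia.
    apply rsum_ext. intros. destruct (Nat.leb_spec (length s) (length s')); auto; lia.
  - rewrite ps_ge by lia. rewrite sum_strings_rsum.
    replace (length s' - length s + (length s - length s'))%nat with (length s - length s')%nat by lia.
    apply rsum_ext. intros. destruct (Nat.leb_spec (length s) (length s')); auto; lia.
Qed.

Lemma pushsplit_computable nu : computable_measure nu -> computable_measure2 (pushsplit nu).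
Proof.
  intros [Hm [p [m [d [Hp [Hmm [Hd Hs]]]]]]]. split.
  - apply pushsplit_measure; auto.
  - exists (AP p d), (AP m d), (AD d).
    split; [apply C_computable, C_AP; auto|].
    split; [apply C_computable, C_AP; auto|].
    split; [apply C_computable, C_AD; auto|].
    intros s s' k. set (z := npair (code_str s) (npair (code_str s') k)).
    assert (Hj : jj z = (length s' - length s + (length s - length s'))%nat).
    { unfold jj, ls, ls2, z. rewrite !sndc_npair, !fstc_npair, !lenc_code. auto. }
    set (j := jj z) in *.
    rewrite (Qof_Psum (AP p d) (AP m d) (AD d) (pw2 j) (fun t => p (QI z t)) (fun t => m (QI z t))
       (fun t => S (d (QI z t))) z); try reflexivity; [|intros; lia].
    rewrite pushsplit_rsum, <- Hj, <- pw2_pow, <- rsum_minus.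
    eapply Rle_trans. apply rsum_abs.
    eapply Rle_trans. apply (rsum_le _ _ (fun _ => / 2 ^ (k + j)%nat)).
    + intros t _. assert (E : TC z t = code_str (rt s s' t)) by (unfold z; apply TC_spec).
      assert (Ek : sndc (sndc z) = k) by (unfold z; rewrite !sndc_npair; auto).
      unfold QI. rewrite E, Ek. pose proof (Hs (rt s s' t) (k + j)%nat) as HH. unfold Qof in HH. exact HH.
    + rewrite rsum_const, pw2_pow, pow_INR, pow_add. simpl INR.
      assert (0 < 2 ^ k) by (apply pow_lt; lra). assert (0 < 2 ^ j) by (apply pow_lt; lra).
      replace (1 + 1) with 2 by ring. right. field. lra.
Qed.

End P10b.
Import P10b.

Theorem mainTheorem7 (mu : list bool -> list bool -> R) :
  computable_measure2 mu ->
  forall X Y : cantor, comp_random2 mu X Y <-> comp_random (pushjoin mu) (join X Y).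
Proof.
  intros Hmu X Y. split.
  - intros Hr t nu Hlsc Hnu Hint.
    exact (Hr (fun X Y => t (join X Y)) (pushsplit nu) (lsc2_join t Hlsc) (pushsplit_computable nu Hnu)
             (int_le2_pushsplit mu nu t (proj1 Hmu) (proj1 Hnu) Hint)).
  - apply dir_back; auto.
Qed.
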